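(* Thompson's groups $F$, $T$ and $V$ are intersection-saturated.
   Context: For an integer $n\geq 1$ write $[n]=\{1,\dots,n\}$. An $n$-configuration is a map $c\colon \mathcal{P}([n])\setminus\{\emptyset\}\to\{0,1\}$. An $n$-configuration $c$ is realisable in a group $G$ if there exist subgroups $H_1,\dots,H_n\leq G$ such that for every non-empty subset $I\subseteq[n]$, the subgroup $\bigcap_{i\in I}H_i$ is finitely generated if and only if $c(I)=0$. A group $G$ is intersection-saturated if for every $n\geq 1$, every $n$-configuration is realisable in $G$. *)

(* Defs.v *)
From mathcomp Require Import all_boot.
From Stdlib Require Import Reals List.

Set Implicit Arguments.
Unset Strict Implicit.
Unset Printing Implicit Defensive.

(* A (concrete) group is a set G of self-maps of a type X, with
   composition as product and the identity map as unit. *)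
Definition compf {X : Type} (f g : X -> X) : X -> X := fun x => f (g x).
Definition idf {X : Type} : X -> X := fun x => x.

Definition is_subgroup {X : Type} (G H : (X -> X) -> Prop) : Prop :=
  (forall f, H f -> G f) /\
  H idf /\
  (forall f g, H f -> H g -> H (compf f g)) /\
  (forall f, H f -> exists g, H g /\ compf f g = idf /\ compf g f = idf).

Inductive gen_by {X : Type} (S : (X -> X) -> Prop) : (X -> X) -> Prop :=
| gen_id : gen_by S idf
| gen_elt : forall s, S s -> gen_by S s
| gen_inv : forall s t, S s -> compf s t = idf -> compf t s = idf -> gen_by S t
| gen_comp : forall f g, gen_by S f -> gen_by S g -> gen_by S (compf f g).

Definition fin_gen {X : Type} (H : (X -> X) -> Prop) : Prop :=
  exists l : list (X -> X),
    (forall g, In g l -> H g) /\ (forall h, H h -> gen_by (fun g => In g l) h).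

Definition bigcapH {X : Type} {n : nat} (Hs : 'I_n -> (X -> X) -> Prop)
  (I : {set 'I_n}) : (X -> X) -> Prop :=
  fun f => forall i, i \in I -> Hs i f.

(* n-configurations: maps from subsets of 'I_n (= [n], reindexed from 0)
   to bool; the value on the empty set is irrelevant. *)
Definition realisable {X : Type} (G : (X -> X) -> Prop) (n : nat)
  (c : {set 'I_n} -> bool) : Prop :=
  exists Hs : 'I_n -> (X -> X) -> Prop,
    (forall i, is_subgroup G (Hs i)) /\
    (forall I : {set 'I_n}, I != set0 ->
        (fin_gen (bigcapH Hs I) <-> c I = false)).

Definition intersection_saturated {X : Type} (G : (X -> X) -> Prop) : Prop :=
  forall n : nat, (1 <= n)%N -> forall c : {set 'I_n} -> bool, realisable G c.

Local Open Scope R_scope.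

Definition dyadic (x : R) : Prop :=
  exists (k : Z) (m : nat), x = IZR k / 2 ^ m.

(* A dyadic subdivision 0 = a 0 < a 1 < ... < a m = 1 with affine pieces
   x |-> 2^(e i) * x + b i, dyadic breakpoints and intercepts.
   [closed] selects closed pieces [a i, a (i+1)] (for F) or half-open
   pieces [a i, a (i+1)) (for T and V). *)
Definition dyadic_PL (closed : bool) (f : R -> R) : Prop :=
  exists (m : nat) (a : nat -> R) (e : nat -> Z) (b : nat -> R),
    a 0%nat = 0 /\ a m = 1 /\
    (forall i, (i < m)%nat -> a i < a (S i)) /\
    (forall i, (i <= m)%nat -> dyadic (a i)) /\
    (forall i, (i < m)%nat -> dyadic (b i)) /\
    (forall i x, (i < m)%nat -> a i <= x ->
        (if closed then x <= a (S i) else x < a (S i)) ->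
        f x = powerRZ 2 (e i) * x + b i).

(* Thompson's group F: piecewise linear homeomorphisms of [0,1] with
   finitely many breakpoints, all dyadic, and slopes powers of 2
   (extended by the identity outside [0,1]). *)
Definition thompsonF (f : R -> R) : Prop :=
  (forall x, (x < 0 \/ 1 < x) -> f x = x) /\
  (forall x, 0 <= x <= 1 -> 0 <= f x <= 1) /\
  (forall x y, 0 <= x <= 1 -> 0 <= y <= 1 -> f x = f y -> x = y) /\
  (forall y, 0 <= y <= 1 -> exists x, 0 <= x <= 1 /\ f x = y) /\
  dyadic_PL true f.

(* Thompson's group V: right-continuous piecewise linear bijections of
   [0,1) with finitely many breakpoints, all dyadic, slopes powers of 2,
   mapping dyadics to dyadics (extended by the identity outside [0,1)). *)
Definition thompsonV (f : R -> R) : Prop :=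
  (forall x, (x < 0 \/ 1 <= x) -> f x = x) /\
  (forall x, 0 <= x < 1 -> 0 <= f x < 1) /\
  (forall x y, 0 <= x < 1 -> 0 <= y < 1 -> f x = f y -> x = y) /\
  (forall y, 0 <= y < 1 -> exists x, 0 <= x < 1 /\ f x = y) /\
  dyadic_PL false f.

Definition cyc (x y z : R) : Prop :=
  (x < y < z) \/ (y < z < x) \/ (z < x < y).

(* Thompson's group T: the elements of V that are (orientation-preserving)
   homeomorphisms of the circle [0,1) = R/Z, i.e. preserve cyclic order. *)
Definition thompsonT (f : R -> R) : Prop :=
  thompsonV f /\
  (forall x y z, 0 <= x -> x < y -> y < z -> z < 1 -> cyc (f x) (f y) (f z)).

(* Main.v *)
Require Import Defs.
From Stdlib Require Import Reals List Lra Lia ZArith Arith ClassicalEpsilon FunctionalExtensionality Classical.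
Open Scope R_scope.

Lemma pow2_pos (n : nat) : 0 < 2 ^ n.
Proof. apply pow_lt; lra. Qed.

Lemma pow2_S (n : nat) : 2 ^ S n = 2 * 2 ^ n.
Proof. reflexivity. Qed.

Lemma pow2_ge (n : nat) : INR n + 1 <= 2 ^ n.
Proof.
  induction n as [|n IH]. simpl; lra.
  rewrite S_INR, pow2_S. pose proof (pow2_pos n). assert (1 <= 2 ^ n).
  { destruct n. simpl; lra. rewrite S_INR in IH. pose proof (pos_INR n). lra. }
  lra.
Qed.

Lemma pow2_small (e : R) : 0 < e -> exists N : nat, / 2 ^ N < e.
Proof.
  intros He. destruct (archimed (/ e)) as [H1 _].
  assert (Hz : (0 <= up (/ e))%Z).
  { apply le_IZR. assert (0 < / e) by (apply Rinv_0_lt_compat; lra). lra. }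
  exists (Z.to_nat (up (/ e))).
  pose proof (pow2_ge (Z.to_nat (up (/e)))) as H2.
  rewrite INR_IZR_INZ, Z2Nat.id in H2 by lia.
  pose proof (pow2_pos (Z.to_nat (up (/ e)))) as H3.
  assert (/ e < 2 ^ Z.to_nat (up (/ e))) by lra.
  rewrite <- (Rinv_inv e) at 2. apply Rinv_lt_contravar; [|lra].
  apply Rmult_lt_0_compat; [apply Rinv_0_lt_compat; lra | lra].
Qed.

Definition lam (k : Z) : nat :=
  if (k <? 0)%Z then Z.to_nat (1 - k) else Z.to_nat (k + 2).
Definition p (k : Z) : R :=
  if (k <=? 0)%Z then / 2 ^ (Z.to_nat (1 - k)) else 1 - / 2 ^ (Z.to_nat (k + 1)).

Lemma p_neg k : (k <= 0)%Z -> p k = / 2 ^ (Z.to_nat (1 - k)).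
Proof. intros. unfold p. destruct (Z.leb_spec k 0); [reflexivity | lia]. Qed.

Lemma p_pos k : (0 <= k)%Z -> p k = 1 - / 2 ^ (Z.to_nat (k + 1)).
Proof.
  intros. unfold p. destruct (Z.leb_spec k 0); [|reflexivity].
  assert (k = 0%Z) by lia. subst. simpl. lra.
Qed.

Lemma lam_neg k : (k < 0)%Z -> lam k = Z.to_nat (1 - k).
Proof. intros. unfold lam. destruct (Z.ltb_spec k 0); [reflexivity | lia]. Qed.
Lemma lam_pos k : (0 <= k)%Z -> lam k = Z.to_nat (k + 2).
Proof. intros. unfold lam. destruct (Z.ltb_spec k 0); [lia | reflexivity]. Qed.

Lemma Zto_nat_S (z : Z) : (0 <= z)%Z -> Z.to_nat (z + 1) = S (Z.to_nat z).
Proof. intros. lia. Qed.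

Lemma p_succ k : p (k + 1) = p k + / 2 ^ lam k.
Proof.
  destruct (Z_lt_le_dec k 0) as [Hk|Hk].
  - rewrite lam_neg by lia. rewrite p_neg by lia. rewrite (p_neg k) by lia.
    replace (Z.to_nat (1 - k)) with (S (Z.to_nat (1 - (k + 1)))) by lia.
    rewrite pow2_S. pose proof (pow2_pos (Z.to_nat (1 - (k + 1)))).
    field. lra.
  - rewrite lam_pos by lia. rewrite p_pos by lia. rewrite (p_pos k) by lia.
    replace (Z.to_nat (k + 1 + 1)) with (S (Z.to_nat (k + 1))) by lia.
    replace (Z.to_nat (k + 2)) with (S (Z.to_nat (k + 1))) by lia.
    rewrite pow2_S. pose proof (pow2_pos (Z.to_nat (k + 1))).
    field. lra.
Qed.

Lemma p_range k : 0 < p k < 1.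
Proof.
  destruct (Z_le_gt_dec k 0).
  - rewrite p_neg by lia.
    replace (Z.to_nat (1 - k)) with (S (Z.to_nat (- k))) by lia.
    rewrite pow2_S. pose proof (pow2_pos (Z.to_nat (- k))).
    pose proof (pow2_ge (Z.to_nat (- k))). pose proof (pos_INR (Z.to_nat (-k))).
    split. apply Rinv_0_lt_compat; lra.
    rewrite <- Rinv_1. apply Rinv_lt_contravar; lra.
  - rewrite p_pos by lia. pose proof (pow2_pos (Z.to_nat (k + 1))).
    replace (Z.to_nat (k + 1)) with (S (Z.to_nat k)) by lia.
    rewrite pow2_S. pose proof (pow2_pos (Z.to_nat k)).
    pose proof (pow2_ge (Z.to_nat k)). pose proof (pos_INR (Z.to_nat k)).
    split.
    + assert (/ (2 * 2 ^ Z.to_nat k) < 1). { rewrite <- Rinv_1. apply Rinv_lt_contravar; lra. } lra.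
    + assert (0 < / (2 * 2 ^ Z.to_nat k)) by (apply Rinv_0_lt_compat; lra). lra.
Qed.

Lemma len_pos k : 0 < / 2 ^ lam k.
Proof. apply Rinv_0_lt_compat, pow2_pos. Qed.

Lemma p_lt_succ k : p k < p (k + 1).
Proof. rewrite p_succ. pose proof (len_pos k). lra. Qed.

Lemma p_lt k k' : (k < k')%Z -> p k < p k'.
Proof.
  intros H. replace k' with (k + Z.of_nat (S (Z.to_nat (k' - k - 1))))%Z by lia.
  induction (Z.to_nat (k' - k - 1)) as [|d IH].
  - replace (k + Z.of_nat 1)%Z with (k + 1)%Z by lia. apply p_lt_succ.
  - eapply Rlt_trans; [apply IH|].
    replace (k + Z.of_nat (S (S d)))%Z with (k + Z.of_nat (S d) + 1)%Z by lia.
    apply p_lt_succ.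
Qed.

Lemma p_le k k' : (k <= k')%Z -> p k <= p k'.
Proof. intros H. destruct (Z.eq_dec k k'). subst; lra. left; apply p_lt; lia. Qed.

Lemma p_lt_inv k k' : p k < p k' -> (k < k')%Z.
Proof. intros H. destruct (Z_lt_le_dec k k') as [h|h]; auto. pose proof (p_le k' k h); lra. Qed.

Lemma p_inj k k' : p k = p k' -> k = k'.
Proof.
  intros H. destruct (Z_lt_le_dec k k') as [h|h]. pose proof (p_lt _ _ h); lra.
  destruct (Z.eq_dec k k'); auto. assert (k' < k)%Z by lia. pose proof (p_lt _ _ H0); lra.
Qed.

Lemma p_not_open j m : ~ (p j < p m < p (j + 1)).
Proof.
  intros [H1 H2]. apply p_lt_inv in H1. apply p_lt_inv in H2. lia.
Qed.

Lemma p_int k : exists z : Z, p k * 2 ^ lam k = IZR z.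
Proof.
  destruct (Z_lt_le_dec k 0).
  - exists 1%Z. rewrite p_neg, lam_neg by lia. rewrite Rinv_l. reflexivity.
    pose proof (pow2_pos (Z.to_nat (1 - k))); lra.
  - rewrite p_pos, lam_pos by lia.
    replace (Z.to_nat (k + 2)) with (S (Z.to_nat (k + 1))) by lia.
    exists (Z.of_nat (Nat.pow 2 (S (Z.to_nat (k + 1)))) - 2)%Z.
    rewrite minus_IZR, <- INR_IZR_INZ, pow_INR. simpl (INR 2).
    replace (1 + 1) with 2 by lra. rewrite pow2_S.
    pose proof (pow2_pos (Z.to_nat (k + 1))). field. lra.
Qed.

Lemma INR_pow2 (n : nat) : INR (Nat.pow 2 n) = 2 ^ n.
Proof. rewrite pow_INR. simpl (INR 2). replace (1 + 1) with 2 by lra. reflexivity. Qed.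

Lemma cell_in_cell (M K j : nat) : (K <= M)%nat -> exists i : nat,
  (forall x, INR j <= x * 2 ^ M <= INR j + 1 -> INR i <= x * 2 ^ K <= INR i + 1) /\
  (INR j + 1 <= 2 ^ M -> INR i + 1 <= 2 ^ K).
Proof.
  intros HKM. set (d := Nat.pow 2 (M - K)).
  assert (Hd : d <> 0%nat) by (apply Nat.pow_nonzero; lia).
  exists (j / d)%nat.
  pose proof (Nat.Div0.mul_div_le j d) as H1.
  pose proof (Nat.div_mod j d Hd) as H2. pose proof (Nat.mod_upper_bound j d Hd) as H3.
  assert (H4 : (j + 1 <= d * (j / d + 1))%nat) by lia.
  assert (HM : 2 ^ M = INR d * 2 ^ K).
  { unfold d. rewrite INR_pow2, <- pow_add. f_equal. lia. }
  assert (HD : 0 < INR d) by (apply lt_0_INR; lia).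
  pose proof (pow2_pos K).
  apply le_INR in H1. apply le_INR in H4.
  rewrite mult_INR in H1, H4. rewrite plus_INR in H4. rewrite plus_INR in H4. simpl (INR 1) in H4.
  split.
  - intros x Hx. rewrite HM in Hx. split.
    + apply (Rmult_le_reg_l (INR d)); [lra|]. nra.
    + apply (Rmult_le_reg_l (INR d)); [lra|]. nra.
  - intros Hj. rewrite HM in Hj.
    assert (Hlt : (j < d * Nat.pow 2 K)%nat).
    { apply INR_lt. rewrite mult_INR, INR_pow2. lra. }
    apply Nat.Div0.div_lt_upper_bound in Hlt.
    assert (Hle : (j / d + 1 <= Nat.pow 2 K)%nat) by lia.
    apply le_INR in Hle. rewrite plus_INR, INR_pow2 in Hle. simpl (INR 1) in Hle. lra.
Qed.

Definition gridPL (N : nat) (f : R -> R) : Prop :=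
  forall i : nat, INR i + 1 <= 2 ^ N ->
    exists (k : nat) (b : R) (z : Z), (k <= N + N)%nat /\ b * 2 ^ N = IZR z /\
      forall x, INR i <= x * 2 ^ N <= INR i + 1 -> f x = 2 ^ k / 2 ^ N * x + b.

Definition good (f : R -> R) : Prop :=
  (forall x, x < 0 \/ 1 < x -> f x = x) /\
  (forall x y, 0 <= x -> x < y -> y <= 1 -> f x < f y) /\
  (forall x, 0 <= x <= 1 -> 0 <= f x <= 1) /\
  (forall y, 0 <= y <= 1 -> exists x, 0 <= x <= 1 /\ f x = y) /\
  (exists N, gridPL N f).

Lemma good_0 f : good f -> f 0 = 0.
Proof.
  intros [H1 [H2 [H3 [H4 _]]]].
  destruct (H4 0) as [x [Hx Hfx]]; [lra|].
  destruct (Req_dec x 0). subst; auto.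
  pose proof (H2 0 x ltac:(lra) ltac:(lra) ltac:(lra)). pose proof (H3 0 ltac:(lra)). lra.
Qed.

Lemma good_1 f : good f -> f 1 = 1.
Proof.
  intros [H1 [H2 [H3 [H4 _]]]].
  destruct (H4 1) as [x [Hx Hfx]]; [lra|].
  destruct (Req_dec x 1). subst; auto.
  pose proof (H2 x 1 ltac:(lra) ltac:(lra) ltac:(lra)). pose proof (H3 1 ltac:(lra)). lra.
Qed.

Lemma good_01 f : good f -> forall s, 0 < s < 1 -> 0 < f s < 1.
Proof.
  intros Hg s Hs. pose proof (good_0 f Hg). pose proof (good_1 f Hg).
  destruct Hg as [_ [H2 _]].
  pose proof (H2 0 s ltac:(lra) ltac:(lra) ltac:(lra)).
  pose proof (H2 s 1 ltac:(lra) ltac:(lra) ltac:(lra)). lra.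
Qed.

Lemma gridPL_comp Nf Ng f g : good f -> gridPL Nf f -> gridPL Ng g ->
  gridPL (Nf + Nf + Ng) (fun x => g (f x)).
Proof.
  intros Hgf Hf Hg i Hi. set (N := (Nf + Nf + Ng)%nat) in *.
  destruct (cell_in_cell N Nf i ltac:(lia)) as [i_f [Hcf Hbf]].
  destruct (Hf i_f (Hbf Hi)) as [kf [bf [zf [Hkf [Hzf Hff]]]]].
  set (M' := (N + Nf - kf)%nat).
  assert (HPN := pow2_pos N). assert (HPNf := pow2_pos Nf).
  assert (E1 : 2 ^ kf * 2 ^ M' = 2 ^ N * 2 ^ Nf).
  { rewrite <- !pow_add. f_equal. unfold M'. lia. }
  assert (E2 : 2 ^ M' = 2 ^ Nf * 2 ^ (M' - Nf)).
  { rewrite <- !pow_add. f_equal. unfold M', N in *. lia. }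
  set (q := (Z.of_nat i + zf * Z.of_nat (Nat.pow 2 (M' - Nf)))%Z).
  assert (Hq : IZR q = INR i + IZR zf * 2 ^ (M' - Nf)).
  { unfold q. rewrite plus_IZR, mult_IZR, <- !INR_IZR_INZ, INR_pow2. reflexivity. }
  assert (Key : forall x, INR i <= x * 2 ^ N <= INR i + 1 ->
            f x * 2 ^ M' = x * 2 ^ N + (IZR q - INR i)).
  { intros x Hx. rewrite (Hff x (Hcf x Hx)). rewrite Hq.
    rewrite <- Hzf. rewrite E2.
    replace ((2 ^ kf / 2 ^ Nf * x + bf) * (2 ^ Nf * 2 ^ (M' - Nf)))
      with (x * (2 ^ kf * (2 ^ Nf * 2 ^ (M' - Nf))) / 2 ^ Nf + bf * 2 ^ Nf * 2 ^ (M' - Nf))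
      by (field; lra).
    rewrite <- E2, E1. field. lra. }
  assert (HI : INR i + 1 <= 2 ^ N) by exact Hi.
  pose proof (pos_INR i) as Hi0.
  destruct Hgf as [_ [_ [Hrange _]]].
  assert (Hq0 : (0 <= q)%Z).
  { apply le_IZR.
    assert (H0 : INR i <= INR i / 2 ^ N * 2 ^ N <= INR i + 1).
    { replace (INR i / 2 ^ N * 2 ^ N) with (INR i) by (field; lra). lra. }
    pose proof (Key _ H0) as K. replace (INR i / 2 ^ N * 2 ^ N) with (INR i) in K by (field; lra).
    assert (0 <= INR i / 2 ^ N <= 1).
    { split. apply Rmult_le_pos; [lra|]. left; apply Rinv_0_lt_compat; lra.
      apply (Rmult_le_reg_r (2 ^ N)); [lra|]. replace (INR i / 2 ^ N * 2 ^ N) with (INR i) by (field; lra). lra. }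
    pose proof (Hrange _ H). pose proof (pow2_pos M'). nra. }
  set (j := Z.to_nat q).
  assert (Hj : INR j = IZR q) by (unfold j; rewrite INR_IZR_INZ, Z2Nat.id; auto).
  assert (Hj1 : INR j + 1 <= 2 ^ M').
  { assert (H0 : INR i <= (INR i + 1) / 2 ^ N * 2 ^ N <= INR i + 1).
    { replace ((INR i + 1) / 2 ^ N * 2 ^ N) with (INR i + 1) by (field; lra). lra. }
    pose proof (Key _ H0) as K. replace ((INR i + 1) / 2 ^ N * 2 ^ N) with (INR i + 1) in K by (field; lra).
    assert (0 <= (INR i + 1) / 2 ^ N <= 1).
    { split. apply Rmult_le_pos; [lra|]. left; apply Rinv_0_lt_compat; lra.
      apply (Rmult_le_reg_r (2 ^ N)); [lra|]. replace ((INR i + 1) / 2 ^ N * 2 ^ N) with (INR i + 1) by (field; lra). lra. }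
    pose proof (Hrange _ H). pose proof (pow2_pos M'). nra. }
  destruct (cell_in_cell M' Ng j ltac:(unfold M', N in *; lia)) as [i_g [Hcg Hbg]].
  destruct (Hg i_g (Hbg Hj1)) as [kg [bg [zg [Hkg [Hzg Hgg]]]]].
  assert (HPNg := pow2_pos Ng).
  exists (kg + kf + Nf)%nat, (2 ^ kg / 2 ^ Ng * bf + bg),
    (Z.of_nat (Nat.pow 2 kg) * zf * Z.of_nat (Nat.pow 2 Nf) + zg * Z.of_nat (Nat.pow 2 (Nf + Nf)))%Z.
  assert (EN : 2 ^ N = 2 ^ Nf * 2 ^ Nf * 2 ^ Ng) by (unfold N; rewrite !pow_add; ring).
  split; [unfold N in *; lia|]. split.
  - rewrite plus_IZR, !mult_IZR, <- !INR_IZR_INZ, !INR_pow2, <- Hzf, <- Hzg.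
    rewrite EN, pow_add. field. lra.
  - intros x Hx.
    assert (Hy : INR j <= f x * 2 ^ M' <= INR j + 1) by (rewrite (Key x Hx), Hj; lra).
    rewrite (Hgg _ (Hcg _ Hy)). rewrite (Hff x (Hcf x Hx)).
    rewrite EN, !pow_add. field. lra.
Qed.

Lemma good_comp f g : good f -> good g -> good (fun x => g (f x)).
Proof.
  intros Hf Hg. pose proof Hf as Hf'. pose proof Hg as Hg'.
  destruct Hf as [F1 [F2 [F3 [F4 [Nf F5]]]]].
  destruct Hg as [G1 [G2 [G3 [G4 [Ng G5]]]]].
  split; [|split; [|split; [|split]]].
  - intros x Hx. rewrite F1, G1; auto.
  - intros x y H1 H2 H3. apply G2.
    + apply F3; lra.
    + apply F2; lra.
    + apply F3; lra.
  - intros x Hx. apply G3, F3, Hx.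
  - intros y Hy. destruct (G4 y Hy) as [x' [Hx' E']]. destruct (F4 x' Hx') as [x [Hx E]].
    exists x. split; auto. rewrite E; auto.
  - exists (Nf + Nf + Ng)%nat. apply gridPL_comp; auto.
Qed.

Definition SC (u : R) (L : nat) (f : R -> R) (x : R) : R :=
  if Rlt_dec u x then if Rlt_dec x (u + / 2 ^ L) then u + / 2 ^ L * f ((x - u) * 2 ^ L) else x else x.

Section SCsec.
Variables (u : R) (L : nat) (zu : Z) (f : R -> R).
Hypotheses (Hu : u * 2 ^ L = IZR zu) (Hu0 : 0 <= u) (Hu1 : u + / 2 ^ L <= 1) (Hf : good f).

Let w := / 2 ^ L.
Let HL : 0 < 2 ^ L := pow2_pos L.
Let Hw : 0 < w := Rinv_0_lt_compat _ HL.
Let Hw2 : w * 2 ^ L = 1 := Rinv_l _ (Rgt_not_eq _ _ HL).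
Ltac prep := pose proof HL as HL_; pose proof Hw as Hw_; pose proof Hw2 as Hw2_; assert (Ew_ : w = / 2 ^ L) by reflexivity.

Lemma SC_mid x : u <= x <= u + w -> SC u L f x = u + w * f ((x - u) * 2 ^ L).
Proof.
  prep.
  intros Hx. unfold SC. fold w.
  destruct (Rlt_dec u x); destruct (Rlt_dec x (u + w)); auto.
  - assert (x = u + w) by lra. subst x.
    replace ((u + w - u) * 2 ^ L) with 1 by lra. rewrite good_1 by auto. lra.
  - assert (x = u) by lra. subst x. replace ((u - u) * 2 ^ L) with 0 by lra.
    rewrite good_0 by auto. lra.
  - assert (x = u) by lra. subst x. replace ((u - u) * 2 ^ L) with 0 by lra.
    rewrite good_0 by auto. lra.
Qed.

Lemma SC_out x : x <= u \/ u + w <= x -> SC u L f x = x.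
Proof.
  prep.
  intros Hx. unfold SC. fold w. destruct (Rlt_dec u x); destruct (Rlt_dec x (u + w)); auto; lra.
Qed.

Lemma SC_t_range x : u <= x <= u + w -> 0 <= (x - u) * 2 ^ L <= 1.
Proof.
  prep.
  intros. split. apply Rmult_le_pos; lra.
  assert ((x - u) * 2 ^ L <= w * 2 ^ L) by (apply Rmult_le_compat_r; lra). lra.
Qed.

Lemma SC_good : good (SC u L f).
Proof.
  prep.
  pose proof Hf as Hf'. destruct Hf' as [F1 [F2 [F3 [F4 [Nf F5]]]]].
  pose proof (good_0 f Hf) as F0. pose proof (good_1 f Hf) as F1'.
  split; [|split; [|split; [|split]]].
  - intros x Hx. apply SC_out. destruct Hx; [left|right]; lra.
  - intros x y H1 H2 H3.
    destruct (Rle_dec x u) as [Hxu|Hxu].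
    + destruct (Rle_dec y u) as [Hyu|Hyu].
      * rewrite !SC_out by (first [left; lra | right; lra]). lra.
      * destruct (Rle_dec y (u + w)) as [Hyw|Hyw].
        -- rewrite (SC_out x) by (first [left; lra | right; lra]). rewrite SC_mid by lra.
           assert (0 < f ((y - u) * 2 ^ L)).
           { rewrite <- F0. apply F2; nra. }
           nra.
        -- rewrite (SC_out x) by (first [left; lra | right; lra]). rewrite (SC_out y) by (first [left; lra | right; lra]). lra.
    + destruct (Rle_dec x (u + w)) as [Hxw|Hxw].
      * destruct (Rle_dec y (u + w)) as [Hyw|Hyw].
        -- rewrite !SC_mid by lra.
           assert (f ((x - u) * 2 ^ L) < f ((y - u) * 2 ^ L)) by (apply F2; nra).
           nra.
        -- rewrite SC_mid by lra. rewrite (SC_out y) by (first [left; lra | right; lra]).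
           pose proof (F3 ((x - u) * 2 ^ L) (SC_t_range x ltac:(lra))). nra.
      * rewrite !SC_out by (first [left; lra | right; lra]). lra.
  - intros x Hx.
    destruct (Rle_dec x u); [rewrite SC_out by (first [left; lra | right; lra]); lra|].
    destruct (Rle_dec x (u + w)); [|rewrite SC_out by (first [left; lra | right; lra]); lra].
    rewrite SC_mid by lra. pose proof (F3 ((x - u) * 2 ^ L) (SC_t_range x ltac:(lra))). nra.
  - intros y Hy.
    destruct (Rle_dec y u); [exists y; split; auto; apply SC_out; first [left; lra | right; lra]|].
    destruct (Rle_dec y (u + w)); [|exists y; split; auto; apply SC_out; first [left; lra | right; lra]].
    destruct (F4 ((y - u) * 2 ^ L)) as [t [Ht Et]]; [nra|].
    exists (u + w * t). split; [nra|].
    rewrite SC_mid by nra. replace ((u + w * t - u) * 2 ^ L) with t by nra.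
    rewrite Et. replace (w * ((y - u) * 2 ^ L)) with ((y - u) * (w * 2 ^ L)) by ring. rewrite Hw2. lra.
  - exists (Nf + L)%nat. intros i Hi.
    set (N := (Nf + L)%nat) in *.
    assert (HPN := pow2_pos N). assert (HPNf := pow2_pos Nf).
    assert (EN : 2 ^ N = 2 ^ Nf * 2 ^ L) by (unfold N; apply pow_add).
    set (U := (zu * Z.of_nat (Nat.pow 2 Nf))%Z).
    assert (HU : IZR U = u * 2 ^ N).
    { unfold U. rewrite mult_IZR, <- INR_IZR_INZ, INR_pow2, <- Hu, EN. ring. }
    assert (Hw2N : w * 2 ^ N = 2 ^ Nf) by (rewrite EN; replace (w * (2 ^ Nf * 2 ^ L)) with (2 ^ Nf * (w * 2 ^ L)) by ring; rewrite Hw2; ring).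
    assert (Hid : (forall x, INR i <= x * 2 ^ N <= INR i + 1 -> SC u L f x = x) ->
      exists (k : nat) (b : R) (z : Z), (k <= N + N)%nat /\ b * 2 ^ N = IZR z /\
      forall x, INR i <= x * 2 ^ N <= INR i + 1 -> SC u L f x = 2 ^ k / 2 ^ N * x + b).
    { intros H. exists N, 0, 0%Z. split; [lia|]. split; [lra|].
      intros x Hx. rewrite H by auto. field. lra. }
    destruct (Z_lt_le_dec (Z.of_nat i) U) as [Hlo|Hlo].
    { apply Hid. intros x Hx. apply SC_out. left.
      assert (Z.of_nat i + 1 <= U)%Z by lia. apply IZR_le in H.
      rewrite plus_IZR, <- INR_IZR_INZ in H. nra. }
    destruct (Z_lt_le_dec (Z.of_nat i) (U + Z.of_nat (Nat.pow 2 Nf))) as [Hhi|Hhi].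
    2:{ apply Hid. intros x Hx. apply SC_out. right.
      apply IZR_le in Hhi. rewrite plus_IZR, <- !INR_IZR_INZ, INR_pow2 in Hhi. nra. }
    set (i' := Z.to_nat (Z.of_nat i - U)).
    assert (Hi' : INR i' = INR i - IZR U).
    { unfold i'. rewrite INR_IZR_INZ, Z2Nat.id by lia. rewrite minus_IZR, <- INR_IZR_INZ. reflexivity. }
    assert (Hi'1 : INR i' + 1 <= 2 ^ Nf).
    { assert (Z.of_nat i + 1 <= U + Z.of_nat (Nat.pow 2 Nf))%Z by lia. apply IZR_le in H.
      rewrite !plus_IZR, <- !INR_IZR_INZ, INR_pow2 in H. lra. }
    destruct (F5 i' Hi'1) as [kf [bf [zf [Hkf [Hzf Hff]]]]].
    exists (kf + L)%nat, (u - 2 ^ kf / 2 ^ Nf * u + w * bf),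
      (zu * Z.of_nat (Nat.pow 2 Nf) - Z.of_nat (Nat.pow 2 kf) * zu + zf)%Z.
    split; [unfold N in *; lia|]. split.
    + rewrite plus_IZR, minus_IZR, !mult_IZR, <- !INR_IZR_INZ, !INR_pow2, <- Hzf, <- Hu.
      rewrite EN. unfold w. field. lra.
    + intros x Hx.
      assert (Hxm : u <= x <= u + w).
      { apply IZR_le in Hlo. apply IZR_lt in Hhi. rewrite <- INR_IZR_INZ in Hlo, Hhi.
        rewrite plus_IZR, <- INR_IZR_INZ, INR_pow2 in Hhi. split; nra. }
      rewrite SC_mid by auto.
      rewrite Hff.
      * rewrite EN, pow_add. unfold w. field. lra.
      * rewrite Hi'. rewrite HU.
        replace ((x - u) * 2 ^ L * 2 ^ Nf) with (x * 2 ^ N - u * 2 ^ N) by (rewrite EN; ring). lra.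
Qed.
End SCsec.

Definition A (k : Z) (s : R) : R := p k + / 2 ^ lam k * s.
Definition Ainv (k : Z) (x : R) : R := (x - p k) * 2 ^ lam k.

Lemma Ainv_A k s : Ainv k (A k s) = s.
Proof. unfold Ainv, A. pose proof (pow2_pos (lam k)). field. lra. Qed.
Lemma A_Ainv k x : A k (Ainv k x) = x.
Proof. unfold Ainv, A. pose proof (pow2_pos (lam k)). field. lra. Qed.
Lemma A_0 k : A k 0 = p k.
Proof. unfold A. ring. Qed.
Lemma A_1 k : A k 1 = p (k + 1).
Proof. unfold A. rewrite p_succ. ring. Qed.
Lemma A_inj k s t : A k s = A k t -> s = t.
Proof. intros H. rewrite <- (Ainv_A k s), <- (Ainv_A k t), H. auto. Qed.
Lemma A_lt k s t : s < t -> A k s < A k t.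
Proof. unfold A. pose proof (len_pos k). intros. nra. Qed.
Lemma A_le k s t : s <= t -> A k s <= A k t.
Proof. unfold A. pose proof (len_pos k). intros. nra. Qed.

Lemma A_open k s : 0 < s < 1 -> p k < A k s < p (k + 1).
Proof. intros. rewrite <- A_0, <- A_1. split; apply A_lt; lra. Qed.
Lemma A_half k s : 0 <= s < 1 -> p k <= A k s < p (k + 1).
Proof. intros. rewrite <- A_0, <- A_1. split; [apply A_le|apply A_lt]; lra. Qed.
Lemma Ainv_open k x : p k < x < p (k + 1) -> 0 < Ainv k x < 1.
Proof.
  intros H. rewrite <- A_0, <- A_1 in H. rewrite <- (A_Ainv k x) in H.
  destruct H as [H1 H2]. split.
  - destruct (Rlt_dec 0 (Ainv k x)); auto. pose proof (A_le k (Ainv k x) 0 ltac:(lra)). lra.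
  - destruct (Rlt_dec (Ainv k x) 1); auto. pose proof (A_le k 1 (Ainv k x) ltac:(lra)). lra.
Qed.
Lemma Ainv_half k x : p k <= x < p (k + 1) -> 0 <= Ainv k x < 1.
Proof.
  intros H. rewrite <- A_0, <- A_1 in H. rewrite <- (A_Ainv k x) in H.
  destruct H as [H1 H2]. split.
  - destruct (Rle_dec 0 (Ainv k x)); auto. pose proof (A_lt k (Ainv k x) 0 ltac:(lra)). lra.
  - destruct (Rlt_dec (Ainv k x) 1); auto. pose proof (A_le k 1 (Ainv k x) ltac:(lra)). lra.
Qed.

Lemma A_01 k s : 0 <= s <= 1 -> 0 < A k s < 1.
Proof.
  intros H. pose proof (A_le k 0 s ltac:(lra)). pose proof (A_le k s 1 ltac:(lra)).
  rewrite A_0 in *. rewrite A_1 in *. pose proof (p_range k). pose proof (p_range (k + 1)). lra.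
Qed.

Lemma block_uniq_open k k' x : p k < x < p (k + 1) -> p k' < x < p (k' + 1) -> k = k'.
Proof.
  intros H1 H2. destruct (Z.lt_trichotomy k k') as [h|[h|h]]; auto.
  - pose proof (p_le (k + 1) k' ltac:(lia)). lra.
  - pose proof (p_le (k' + 1) k ltac:(lia)). lra.
Qed.
Lemma block_uniq_half k k' x : p k <= x < p (k + 1) -> p k' <= x < p (k' + 1) -> k = k'.
Proof.
  intros H1 H2. destruct (Z.lt_trichotomy k k') as [h|[h|h]]; auto.
  - pose proof (p_le (k + 1) k' ltac:(lia)). lra.
  - pose proof (p_le (k' + 1) k ltac:(lia)). lra.
Qed.

Lemma p_neg_nat (N : nat) : p (- Z.of_nat N) = / 2 ^ (S N).
Proof. rewrite p_neg by lia. f_equal. f_equal. lia. Qed.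
Lemma p_pos_nat (N : nat) : p (Z.of_nat N) = 1 - / 2 ^ (S N).
Proof. rewrite p_pos by lia. f_equal. f_equal. f_equal. lia. Qed.

Lemma block_exists x : 0 < x < 1 -> exists k, p k <= x < p (k + 1).
Proof.
  intros Hx.
  destruct (pow2_small x ltac:(lra)) as [N1 H1].
  destruct (pow2_small (1 - x) ltac:(lra)) as [N2 H2].
  set (N := (N1 + N2)%nat).
  assert (HA : p (- Z.of_nat N) <= x).
  { rewrite p_neg_nat. left. eapply Rle_lt_trans; [|apply H1].
    apply Rinv_le_contravar. apply pow2_pos. apply Rle_pow; [lra|unfold N; lia]. }
  assert (HB : x < p (Z.of_nat N)).
  { rewrite p_pos_nat. assert (/ 2 ^ S N < 1 - x); [|lra]. eapply Rle_lt_trans; [|apply H2].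
    apply Rinv_le_contravar. apply pow2_pos. apply Rle_pow; [lra|unfold N; lia]. }
  assert (Gen : forall (d : nat) (a : Z), p a <= x -> x < p (a + Z.of_nat d) ->
            exists k, p k <= x < p (k + 1)).
  { induction d as [|d IH]; intros a Ha Hb.
    - rewrite Z.add_0_r in Hb. lra.
    - destruct (Rlt_dec x (p (a + Z.of_nat d))) as [h|h].
      + apply (IH a Ha h).
      + exists (a + Z.of_nat d)%Z. split; [lra|].
        replace (a + Z.of_nat d + 1)%Z with (a + Z.of_nat (S d))%Z by lia. auto. }
  apply (Gen (N + N)%nat (- Z.of_nat N)%Z HA).
  replace (- Z.of_nat N + Z.of_nat (N + N))%Z with (Z.of_nat N) by lia. auto.
Qed.

Definition bidx (x : R) : Z :=
  match excluded_middle_informative (exists k, p k <= x < p (k + 1)) with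
  | left H => proj1_sig (constructive_indefinite_description _ H)
  | right _ => 0%Z
  end.

Lemma bidx_spec k x : p k <= x < p (k + 1) -> bidx x = k.
Proof.
  intros H. unfold bidx. destruct (excluded_middle_informative _) as [H'|H'].
  - destruct (constructive_indefinite_description _ H') as [k' Hk']. simpl.
    eapply block_uniq_half; eauto.
  - exfalso. apply H'. eauto.
Qed.

Lemma decomp x : 0 < x < 1 -> exists k s, 0 <= s < 1 /\ x = A k s.
Proof.
  intros H. destruct (block_exists x H) as [k Hk]. exists k, (Ainv k x).
  split. apply Ainv_half; auto. rewrite A_Ainv; auto.
Qed.

Definition T (n : Z) (x : R) : R :=
  if Rlt_dec 0 x then if Rlt_dec x 1 then A (bidx x + n) (Ainv (bidx x) x) else x else x.

Lemma T_A n k s : 0 <= s <= 1 -> T n (A k s) = A (k + n) s.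
Proof.
  intros Hs. destruct (Req_dec s 1) as [E|E].
  - subst s. rewrite A_1. rewrite <- (A_0 (k + 1)).
    unfold T. pose proof (A_01 (k + 1) 0 ltac:(lra)).
    destruct (Rlt_dec 0 _); [|lra]. destruct (Rlt_dec _ 1); [|lra].
    rewrite (bidx_spec (k + 1)) by (apply A_half; lra). rewrite Ainv_A.
    rewrite A_0. replace (k + 1 + n)%Z with (k + n + 1)%Z by lia. rewrite <- A_1. reflexivity.
  - unfold T. pose proof (A_01 k s ltac:(lra)).
    destruct (Rlt_dec 0 _); [|lra]. destruct (Rlt_dec _ 1); [|lra].
    rewrite (bidx_spec k) by (apply A_half; lra). rewrite Ainv_A. reflexivity.
Qed.

Lemma T_out n x : x <= 0 \/ 1 <= x -> T n x = x.
Proof. intros H. unfold T. destruct (Rlt_dec 0 x); destruct (Rlt_dec x 1); auto; lra. Qed.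

Lemma T_01 n x : 0 < x < 1 -> 0 < T n x < 1.
Proof.
  intros H. destruct (decomp x H) as [k [s [Hs ->]]]. rewrite T_A by lra. apply A_01; lra.
Qed.

Lemma T_add n m x : T n (T m x) = T (m + n) x.
Proof.
  destruct (Rlt_dec 0 x); destruct (Rlt_dec x 1).
  - destruct (decomp x ltac:(lra)) as [k [s [Hs ->]]]. rewrite !T_A by lra.
    f_equal. lia.
  - rewrite (T_out m x), (T_out n x), (T_out (m + n) x); auto; right; lra.
  - rewrite (T_out m x), (T_out n x), (T_out (m + n) x); auto; left; lra.
  - rewrite (T_out m x), (T_out n x), (T_out (m + n) x); auto; left; lra.
Qed.

Lemma T_0 x : T 0 x = x.
Proof.
  destruct (Rlt_dec 0 x); destruct (Rlt_dec x 1);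
    try (rewrite T_out by (first [left; lra | right; lra]); auto).
  destruct (decomp x ltac:(lra)) as [k [s [Hs ->]]]. rewrite T_A by lra. f_equal. lia.
Qed.

Lemma T_p n m : T n (p m) = p (m + n).
Proof. rewrite <- !A_0. apply T_A. lra. Qed.

Ltac dis := first [left; lra | right; lra].

Definition f1 (x : R) : R :=
  if Rle_dec x 0 then x else if Rle_dec x (1/4) then 2 * x else
  if Rle_dec x (1/2) then x + 1/4 else if Rle_dec x 1 then (x + 1) / 2 else x.
Definition fm1 (x : R) : R :=
  if Rle_dec x 0 then x else if Rle_dec x (1/2) then x / 2 else
  if Rle_dec x (3/4) then x - 1/4 else if Rle_dec x 1 then 2 * x - 1 else x.

Lemma f1_a x : 0 <= x <= 1/4 -> f1 x = 2 * x.
Proof. intros. unfold f1. destruct (Rle_dec x 0); [lra|]. destruct (Rle_dec x (1/4)); lra. Qed.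
Lemma f1_b x : 1/4 <= x <= 1/2 -> f1 x = x + 1/4.
Proof. intros. unfold f1. destruct (Rle_dec x 0); [lra|]. destruct (Rle_dec x (1/4)); [lra|].
  destruct (Rle_dec x (1/2)); lra. Qed.
Lemma f1_c x : 1/2 <= x <= 1 -> f1 x = (x + 1) / 2.
Proof. intros. unfold f1. destruct (Rle_dec x 0); [lra|]. destruct (Rle_dec x (1/4)); [lra|].
  destruct (Rle_dec x (1/2)); [lra|]. destruct (Rle_dec x 1); lra. Qed.
Lemma f1_out x : x <= 0 \/ 1 <= x -> f1 x = x.
Proof. intros. unfold f1. destruct (Rle_dec x 0); [lra|]. destruct (Rle_dec x (1/4)); [lra|].
  destruct (Rle_dec x (1/2)); [lra|]. destruct (Rle_dec x 1); lra. Qed.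

Lemma fm1_a x : 0 <= x <= 1/2 -> fm1 x = x / 2.
Proof. intros. unfold fm1. destruct (Rle_dec x 0); [lra|]. destruct (Rle_dec x (1/2)); lra. Qed.
Lemma fm1_b x : 1/2 <= x <= 3/4 -> fm1 x = x - 1/4.
Proof. intros. unfold fm1. destruct (Rle_dec x 0); [lra|]. destruct (Rle_dec x (1/2)); [lra|].
  destruct (Rle_dec x (3/4)); lra. Qed.
Lemma fm1_c x : 3/4 <= x <= 1 -> fm1 x = 2 * x - 1.
Proof. intros. unfold fm1. destruct (Rle_dec x 0); [lra|]. destruct (Rle_dec x (1/2)); [lra|].
  destruct (Rle_dec x (3/4)); [lra|]. destruct (Rle_dec x 1); lra. Qed.
Lemma fm1_out x : x <= 0 \/ 1 <= x -> fm1 x = x.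
Proof. intros. unfold fm1. destruct (Rle_dec x 0); [lra|]. destruct (Rle_dec x (1/2)); [lra|].
  destruct (Rle_dec x (3/4)); [lra|]. destruct (Rle_dec x 1); lra. Qed.

Ltac f1cases x :=
  first [ rewrite (f1_a x) by lra | rewrite (f1_b x) by lra | rewrite (f1_c x) by lra
        | rewrite (f1_out x) by dis ].
Ltac fm1cases x :=
  first [ rewrite (fm1_a x) by lra | rewrite (fm1_b x) by lra | rewrite (fm1_c x) by lra
        | rewrite (fm1_out x) by dis ].

Ltac region x :=
  destruct (Rle_dec x (1/4)); destruct (Rle_dec x (1/2)); destruct (Rle_dec x (3/4)).

Lemma f1_fm1 y : 0 <= y <= 1 -> f1 (fm1 y) = y.
Proof.
  intros Hy. region y; fm1cases y; match goal with |- f1 ?z = _ => f1cases z end; lra.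
Qed.
Lemma fm1_f1 y : 0 <= y <= 1 -> fm1 (f1 y) = y.
Proof.
  intros Hy. region y; f1cases y; match goal with |- fm1 ?z = _ => fm1cases z end; lra.
Qed.

Lemma gridPL_id : gridPL 0 (fun x => x).
Proof.
  intros i Hi. exists 0%nat, 0, 0%Z. split; [lia|]. split; [simpl; ring|].
  intros. simpl. lra.
Qed.

Lemma good_id : good (fun x => x).
Proof.
  split; [|split; [|split; [|split]]].
  - intros; reflexivity.
  - intros. lra.
  - intros; auto.
  - intros y Hy. exists y; auto.
  - exists 0%nat. apply gridPL_id.
Qed.

Lemma INR_cases (i : nat) : INR i + 1 <= 2 ^ 2 ->
  i = 0%nat \/ i = 1%nat \/ i = 2%nat \/ i = 3%nat.
Proof.
  intros H. destruct i as [|[|[|[|i]]]]; auto.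
  exfalso. rewrite !S_INR in H. pose proof (pos_INR i). simpl in H. lra.
Qed.

Lemma good_f1 : good f1.
Proof.
  split; [|split; [|split; [|split]]].
  - intros x Hx. apply f1_out. destruct Hx; dis.
  - intros x y H1 H2 H3. region x; region y; f1cases x; f1cases y; lra.
  - intros x Hx. region x; f1cases x; lra.
  - intros y Hy. exists (fm1 y). split.
    + region y; fm1cases y; lra.
    + apply f1_fm1; auto.
  - exists 2%nat. intros i Hi. simpl (2 ^ 2) in *.
    destruct (INR_cases i Hi) as [ -> | [ -> | [ -> | -> ] ] ]; simpl INR.
    + exists 3%nat, 0, 0%Z. split; [lia|]. split; [lra|]. intros x Hx. simpl.
      rewrite f1_a by lra. lra.
    + exists 2%nat, (1/4), 1%Z. split; [lia|]. split; [lra|]. intros x Hx. simpl.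
      rewrite f1_b by lra. lra.
    + exists 1%nat, (1/2), 2%Z. split; [lia|]. split; [lra|]. intros x Hx. simpl.
      rewrite f1_c by lra. lra.
    + exists 1%nat, (1/2), 2%Z. split; [lia|]. split; [lra|]. intros x Hx. simpl.
      rewrite f1_c by lra. lra.
Qed.

Lemma good_fm1 : good fm1.
Proof.
  split; [|split; [|split; [|split]]].
  - intros x Hx. apply fm1_out. destruct Hx; dis.
  - intros x y H1 H2 H3. region x; region y; fm1cases x; fm1cases y; lra.
  - intros x Hx. region x; fm1cases x; lra.
  - intros y Hy. exists (f1 y). split.
    + region y; f1cases y; lra.
    + apply fm1_f1; auto.
  - exists 2%nat. intros i Hi. simpl (2 ^ 2) in *.
    destruct (INR_cases i Hi) as [ -> | [ -> | [ -> | -> ] ] ]; simpl INR.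
    + exists 1%nat, 0, 0%Z. split; [lia|]. split; [lra|]. intros x Hx. simpl.
      rewrite fm1_a by lra. lra.
    + exists 1%nat, 0, 0%Z. split; [lia|]. split; [lra|]. intros x Hx. simpl.
      rewrite fm1_a by lra. lra.
    + exists 2%nat, (-1/4), (-1)%Z. split; [lia|]. split; [lra|]. intros x Hx. simpl.
      rewrite fm1_b by lra. lra.
    + exists 3%nat, (-1), (-4)%Z. split; [lia|]. split; [lra|]. intros x Hx. simpl.
      rewrite fm1_c by lra. lra.
Qed.

Lemma A_negk k s : (k < 0)%Z -> A k s = (1 + s) / 2 ^ (Z.to_nat (1 - k)).
Proof. intros. unfold A. rewrite p_neg, lam_neg by lia. field. pose proof (pow2_pos (Z.to_nat (1 - k))). lra. Qed.
Lemma A_posk k s : (0 <= k)%Z -> A k s = 1 - / 2 ^ (Z.to_nat (k + 1)) + s / 2 ^ (Z.to_nat (k + 2)).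
Proof. intros. unfold A. rewrite p_pos, lam_pos by lia. pose proof (pow2_pos (Z.to_nat (k + 2))). pose proof (pow2_pos (Z.to_nat (k + 1))). field. lra. Qed.

Lemma div_le_inv s X : s <= 1 -> 0 < X -> s / X <= / X.
Proof.
  intros. unfold Rdiv. rewrite <- (Rmult_1_l (/ X)) at 2. apply Rmult_le_compat_r; [|lra].
  left; apply Rinv_0_lt_compat; lra.
Qed.

Lemma pow2_ge4 m : (2 <= m)%nat -> 4 <= 2 ^ m.
Proof. intros. replace 4 with (2 ^ 2) by (simpl; lra). apply Rle_pow; [lra|lia]. Qed.

Lemma f1_A k s : 0 <= s < 1 -> f1 (A k s) = A (k + 1) s.
Proof.
  intros Hs.
  destruct (Z_lt_le_dec k (-1)) as [h|h].
  - rewrite !A_negk by lia.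
    set (m := Z.to_nat (- k)).
    replace (Z.to_nat (1 - k)) with (S m) by (unfold m; lia).
    replace (Z.to_nat (1 - (k + 1))) with m by (unfold m; lia).
    assert (4 <= 2 ^ m) by (apply pow2_ge4; unfold m; lia).
    rewrite pow2_S. rewrite f1_a.
    + field. lra.
    + split. apply Rmult_le_pos; [lra|]. left; apply Rinv_0_lt_compat; lra.
      apply (Rmult_le_reg_r (2 * 2 ^ m)); [lra|].
      replace ((1 + s) / (2 * 2 ^ m) * (2 * 2 ^ m)) with (1 + s) by (field; lra). nra.
  - destruct (Z.eq_dec k (-1)) as [->|h'].
    + rewrite A_negk by lia. rewrite A_posk by lia. simpl.
      rewrite f1_b by lra. field.
    + rewrite !A_posk by lia.
      set (m := Z.to_nat k).
      replace (Z.to_nat (k + 1)) with (S m) by (unfold m; lia).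
      replace (Z.to_nat (k + 2)) with (S (S m)) by (unfold m; lia).
      replace (Z.to_nat (k + 1 + 1)) with (S (S m)) by (unfold m; lia).
      replace (Z.to_nat (k + 1 + 2)) with (S (S (S m))) by (unfold m; lia).
      rewrite !pow2_S. pose proof (pow2_pos m). pose proof (pow2_ge m).
      pose proof (pos_INR m).
      rewrite f1_c.
      * field. lra.
      * split.
        -- assert (/ (2 * 2 ^ m) <= 1/2).
           { apply (Rmult_le_reg_r (2 * 2 ^ m)); [lra|]. rewrite Rinv_l by lra. nra. }
           assert (0 <= s / (2 * (2 * 2 ^ m))) by (apply Rmult_le_pos; [lra|left; apply Rinv_0_lt_compat; lra]).
           lra.
        -- assert (s / (2 * (2 * 2 ^ m)) <= / (2 * (2 * 2 ^ m))).
           { apply div_le_inv; lra. }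
           assert (/ (2 * (2 * 2 ^ m)) <= / (2 * 2 ^ m)).
           { apply Rinv_le_contravar; lra. }
           lra.
Qed.

Lemma fm1_A k s : 0 <= s < 1 -> fm1 (A k s) = A (k - 1) s.
Proof.
  intros Hs.
  destruct (Z_lt_le_dec k 0) as [h|h].
  - rewrite !A_negk by lia.
    set (m := Z.to_nat (- k)).
    replace (Z.to_nat (1 - k)) with (S m) by (unfold m; lia).
    replace (Z.to_nat (1 - (k - 1))) with (S (S m)) by (unfold m; lia).
    assert (2 <= 2 ^ m).
    { replace 2 with (2 ^ 1) at 1 by (simpl; lra). apply Rle_pow; [lra|unfold m; lia]. }
    rewrite !pow2_S. rewrite fm1_a.
    + field. lra.
    + split. apply Rmult_le_pos; [lra|]. left; apply Rinv_0_lt_compat; lra.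
      apply (Rmult_le_reg_r (2 * 2 ^ m)); [lra|].
      replace ((1 + s) / (2 * 2 ^ m) * (2 * 2 ^ m)) with (1 + s) by (field; lra). nra.
  - destruct (Z.eq_dec k 0) as [->|h'].
    + rewrite (A_negk (0 - 1)) by lia. rewrite (A_posk 0) by lia. simpl.
      rewrite fm1_b by lra. field.
    + rewrite !A_posk by lia.
      set (m := Z.to_nat (k - 1)).
      replace (Z.to_nat (k + 1)) with (S (S m)) by (unfold m; lia).
      replace (Z.to_nat (k + 2)) with (S (S (S m))) by (unfold m; lia).
      replace (Z.to_nat (k - 1 + 1)) with (S m) by (unfold m; lia).
      replace (Z.to_nat (k - 1 + 2)) with (S (S m)) by (unfold m; lia).
      rewrite !pow2_S. pose proof (pow2_pos m). pose proof (pow2_ge m).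
      pose proof (pos_INR m).
      rewrite fm1_c.
      * field. lra.
      * split.
        -- assert (/ (2 * (2 * 2 ^ m)) <= 1/4).
           { apply (Rmult_le_reg_r (2 * (2 * 2 ^ m))); [lra|]. rewrite Rinv_l by lra. nra. }
           assert (0 <= s / (2 * (2 * (2 * 2 ^ m)))) by (apply Rmult_le_pos; [lra|left; apply Rinv_0_lt_compat; lra]).
           lra.
        -- assert (s / (2 * (2 * (2 * 2 ^ m))) <= / (2 * (2 * (2 * 2 ^ m)))).
           { apply div_le_inv; lra. }
           assert (/ (2 * (2 * (2 * 2 ^ m))) <= / (2 * (2 * 2 ^ m))).
           { apply Rinv_le_contravar; lra. }
           lra.
Qed.

Lemma T_1 : T 1 = f1.
Proof.
  apply functional_extensionality. intros x.
  destruct (Rlt_dec 0 x); destruct (Rlt_dec x 1).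
  - destruct (decomp x ltac:(lra)) as [k [s [Hs ->]]]. rewrite T_A by lra. rewrite f1_A; auto.
  - rewrite T_out, f1_out; auto; right; lra.
  - rewrite T_out, f1_out; auto; left; lra.
  - rewrite T_out, f1_out; auto; left; lra.
Qed.

Lemma T_m1 : T (-1) = fm1.
Proof.
  apply functional_extensionality. intros x.
  destruct (Rlt_dec 0 x); destruct (Rlt_dec x 1).
  - destruct (decomp x ltac:(lra)) as [k [s [Hs ->]]]. rewrite T_A by lra. rewrite fm1_A; auto.
  - rewrite T_out, fm1_out; auto; right; lra.
  - rewrite T_out, fm1_out; auto; left; lra.
  - rewrite T_out, fm1_out; auto; left; lra.
Qed.

Lemma good_T n : good (T n).
Proof.
  assert (H0 : T 0 = fun x => x) by (apply functional_extensionality; apply T_0).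
  assert (Hp : forall d : nat, good (T (Z.of_nat d))).
  { induction d as [|d IH].
    - simpl. rewrite H0. apply good_id.
    - replace (T (Z.of_nat (S d))) with (fun x => T 1 (T (Z.of_nat d) x)).
      + apply good_comp; auto. rewrite T_1. apply good_f1.
      + apply functional_extensionality. intros x. rewrite T_add. f_equal. lia. }
  assert (Hm : forall d : nat, good (T (- Z.of_nat d))).
  { induction d as [|d IH].
    - simpl. rewrite H0. apply good_id.
    - replace (T (- Z.of_nat (S d))) with (fun x => T (-1) (T (- Z.of_nat d) x)).
      + apply good_comp; auto. rewrite T_m1. apply good_fm1.
      + apply functional_extensionality. intros x. rewrite T_add. f_equal. lia. }
  destruct (Z_le_gt_dec 0 n).
  - replace n with (Z.of_nat (Z.to_nat n)) by lia. apply Hp.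
  - replace n with (- Z.of_nat (Z.to_nat (- n)))%Z by lia. apply Hm.
Qed.

Definition Scale (k : Z) (f : R -> R) : R -> R := SC (p k) (lam k) f.

Lemma Scale_in k f x : p k < x < p (k + 1) -> Scale k f x = A k (f (Ainv k x)).
Proof.
  intros H. rewrite p_succ in H. unfold Scale, SC, A, Ainv.
  destruct (Rlt_dec (p k) x); [|lra]. destruct (Rlt_dec x _); [|lra]. reflexivity.
Qed.
Lemma Scale_out k f x : ~ (p k < x < p (k + 1)) -> Scale k f x = x.
Proof.
  intros H. rewrite p_succ in H. unfold Scale, SC.
  destruct (Rlt_dec (p k) x); auto. destruct (Rlt_dec x _); auto. exfalso; apply H; lra.
Qed.
Lemma good_Scale k f : good f -> good (Scale k f).
Proof.
  intros Hf. destruct (p_int k) as [z Hz]. unfold Scale. apply (SC_good _ _ z); auto.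
  - pose proof (p_range k); lra.
  - rewrite <- p_succ. pose proof (p_range (k + 1)); lra.
Qed.

Definition BlkF (phi : Z -> R -> R) (x : R) : R :=
  match excluded_middle_informative (exists k, p k < x < p (k + 1)) with
  | left H => let k := proj1_sig (constructive_indefinite_description _ H) in
              A k (phi k (Ainv k x))
  | right _ => x
  end.

Lemma BlkF_in phi k x : p k < x < p (k + 1) -> BlkF phi x = A k (phi k (Ainv k x)).
Proof.
  intros H. unfold BlkF. destruct (excluded_middle_informative _) as [H'|H'].
  - destruct (constructive_indefinite_description _ H') as [k' Hk']. simpl.
    rewrite (block_uniq_open k' k x); auto.
  - exfalso. apply H'. eauto.
Qed.
Lemma BlkF_out phi x : (forall k, ~ (p k < x < p (k + 1))) -> BlkF phi x = x.
Proof.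
  intros H. unfold BlkF. destruct (excluded_middle_informative _) as [H'|H']; auto.
  exfalso. destruct H' as [k Hk]. apply (H k Hk).
Qed.

Definition inv01 (f : R -> R) : Prop := forall s, 0 < s < 1 -> 0 < f s < 1.

Lemma BlkF_case (P : R -> Prop) phi x :
  (forall k, p k < x < p (k + 1) -> P (A k (phi k (Ainv k x)))) ->
  ((forall k, ~ (p k < x < p (k + 1))) -> P x) -> P (BlkF phi x).
Proof.
  intros H1 H2. destruct (excluded_middle_informative (exists k, p k < x < p (k + 1))) as [[k Hk]|Hn].
  - rewrite (BlkF_in phi k x Hk). apply H1; auto.
  - rewrite BlkF_out. apply H2. intros k Hk. apply Hn; eauto.
    intros k Hk. apply Hn; eauto.
Qed.

Lemma BlkF_comp phi psi x : (forall k, inv01 (psi k)) ->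
  BlkF phi (BlkF psi x) = BlkF (fun k s => phi k (psi k s)) x.
Proof.
  intros Hpsi.
  destruct (excluded_middle_informative (exists k, p k < x < p (k + 1))) as [[k Hk]|Hn].
  - rewrite !(BlkF_in _ k x Hk).
    pose proof (Hpsi k (Ainv k x) (Ainv_open k x Hk)).
    rewrite (BlkF_in _ k). rewrite Ainv_A. reflexivity. apply A_open; auto.
  - assert (Hn' : forall k, ~ (p k < x < p (k + 1))) by (intros k Hk; apply Hn; eauto).
    rewrite !(BlkF_out _ x Hn'). auto.
Qed.

Lemma BlkF_ext phi psi x : (forall k s, 0 < s < 1 -> phi k s = psi k s) ->
  BlkF phi x = BlkF psi x.
Proof.
  intros H.
  destruct (excluded_middle_informative (exists k, p k < x < p (k + 1))) as [[k Hk]|Hn].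
  - rewrite !(BlkF_in _ k x Hk). rewrite H; auto. apply Ainv_open; auto.
  - assert (Hn' : forall k, ~ (p k < x < p (k + 1))) by (intros k Hk; apply Hn; eauto).
    rewrite !(BlkF_out _ x Hn'). auto.
Qed.

Lemma BlkF_idf x : BlkF (fun _ s => s) x = x.
Proof.
  apply (BlkF_case (fun y => y = x)); auto. intros k Hk. apply A_Ainv.
Qed.

Lemma BlkF_01 phi : (forall k, inv01 (phi k)) -> inv01 (BlkF phi).
Proof.
  intros H x Hx. apply (BlkF_case (fun y => 0 < y < 1)); auto.
  intros k Hk. apply A_01. pose proof (H k (Ainv k x) (Ainv_open k x Hk)). lra.
Qed.

Lemma T_BlkF n phi x : (forall k, inv01 (phi k)) ->
  T n (BlkF phi x) = BlkF (fun k => phi (k - n)%Z) (T n x).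
Proof.
  intros Hphi.
  destruct (excluded_middle_informative (exists k, p k < x < p (k + 1))) as [[k Hk]|Hn].
  - rewrite (BlkF_in _ k x Hk).
    pose proof (Ainv_open k x Hk) as Hs.
    pose proof (Hphi k _ Hs).
    rewrite T_A by lra.
    rewrite <- (A_Ainv k x) at 2. rewrite T_A by lra.
    rewrite (BlkF_in _ (k + n)). rewrite Ainv_A. replace (k + n - n)%Z with k by lia. reflexivity.
    rewrite <- A_0, <- A_1.
    split; apply A_lt; lra.
  - assert (Hn' : forall k, ~ (p k < x < p (k + 1))) by (intros k Hk; apply Hn; eauto).
    rewrite (BlkF_out _ x Hn'). rewrite BlkF_out; auto.
    intros j Hj.
    destruct (Rlt_dec 0 x); destruct (Rlt_dec x 1).
    + destruct (decomp x ltac:(lra)) as [k [s [Hs E]]].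
      destruct (Req_dec s 0) as [E0|E0].
      * subst s. rewrite E, A_0, T_p in Hj. apply (p_not_open _ _ Hj).
      * apply (Hn' k). rewrite E. apply A_open. lra.
    + rewrite T_out in Hj by (right; lra). apply (Hn' j Hj).
    + rewrite T_out in Hj by (left; lra). apply (Hn' j Hj).
    + rewrite T_out in Hj by (left; lra). apply (Hn' j Hj).
Qed.

Lemma BlkF_single k f x :
  BlkF (fun j => if Z.eq_dec j k then f else (fun s => s)) x = Scale k f x.
Proof.
  destruct (excluded_middle_informative (exists k, p k < x < p (k + 1))) as [[j Hj]|Hn].
  - rewrite (BlkF_in _ j x Hj). destruct (Z.eq_dec j k) as [->|ne].
    + rewrite Scale_in; auto.
    + rewrite A_Ainv. rewrite Scale_out; auto. intros Hk. apply ne. eapply block_uniq_open; eauto.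
  - assert (Hn' : forall k, ~ (p k < x < p (k + 1))) by (intros k' Hk; apply Hn; eauto).
    rewrite (BlkF_out _ x Hn'). rewrite Scale_out; auto.
Qed.

Lemma good_inv01 f : good f -> inv01 f.
Proof. intros H s Hs. apply good_01; auto. Qed.

Lemma BlkF_good (L : list Z) : forall phi, (forall k, good (phi k)) ->
  (forall k, ~ In k L -> forall s, phi k s = s) -> good (BlkF phi).
Proof.
  induction L as [|a L IH]; intros phi Hg Hid.
  - replace (BlkF phi) with (fun x : R => x). apply good_id.
    apply functional_extensionality. intros x. rewrite <- (BlkF_idf x) at 1.
    apply BlkF_ext. intros k s _. rewrite Hid; auto.
  - set (phi' := fun j => if Z.eq_dec j a then (fun s : R => s) else phi j).
    set (phia := fun j => if Z.eq_dec j a then phi a else (fun s : R => s)).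
    assert (Hg' : forall k, good (phi' k)).
    { intros k. unfold phi'. destruct (Z.eq_dec k a). apply good_id. auto. }
    replace (BlkF phi) with (fun x => BlkF phia (BlkF phi' x)).
    + apply good_comp.
      * apply IH; auto. intros k Hk s. unfold phi'. destruct (Z.eq_dec k a); auto.
        apply Hid. simpl. intros [E|E]; auto.
      * replace (BlkF phia) with (Scale a (phi a)). apply good_Scale; auto.
        apply functional_extensionality. intros x. symmetry. apply BlkF_single.
    + apply functional_extensionality. intros x. rewrite BlkF_comp.
      * apply BlkF_ext. intros k s _. unfold phia, phi'. destruct (Z.eq_dec k a); subst; auto.
      * intros k. apply good_inv01; auto.
Qed.

Definition ZW := ((Z -> Z) * Z)%type.
Definition mulW (w w' : ZW) : ZW :=
  (fun k => (fst w k + fst w' (k - snd w))%Z, (snd w + snd w')%Z).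
Definition invW (w : ZW) : ZW := (fun k => (- fst w (k + snd w))%Z, (- snd w)%Z).
Definition oneW : ZW := (fun _ => 0%Z, 0%Z).

Definition W (w : ZW) (x : R) : R := BlkF (fun k => T (fst w k)) (T (snd w) x).

Lemma T_inv01 n : inv01 (T n).
Proof. intros s Hs. apply T_01; auto. Qed.

Lemma W_mul w w' x : W (mulW w w') x = W w (W w' x).
Proof.
  unfold W. rewrite T_BlkF by (intros; apply T_inv01).
  rewrite BlkF_comp by (intros; apply T_inv01).
  rewrite T_add. simpl. rewrite (Z.add_comm (snd w') (snd w)).
  apply BlkF_ext. intros k s _. rewrite T_add. f_equal. lia.
Qed.

Lemma W_one x : W oneW x = x.
Proof.
  unfold W. simpl. rewrite T_0. rewrite <- (BlkF_idf x) at 2. apply BlkF_ext.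
  intros. apply T_0.
Qed.

Lemma W_01 w : inv01 (W w).
Proof. intros s Hs. unfold W. apply BlkF_01. intros; apply T_inv01. apply T_01; auto. Qed.

Definition zrange (K : nat) : list Z :=
  map (fun i => (Z.of_nat i - Z.of_nat K)%Z) (seq 0 (K + K + 1)).

Lemma zrange_in K k : (Z.abs k <= Z.of_nat K)%Z -> In k (zrange K).
Proof.
  intros H. unfold zrange. apply in_map_iff. exists (Z.to_nat (k + Z.of_nat K)).
  split. lia. apply in_seq. lia.
Qed.

Lemma W_good w : (exists K : nat, forall j, (Z.of_nat K < Z.abs j)%Z -> fst w j = 0%Z) -> good (W w).
Proof.
  intros [K HK]. unfold W.
  apply (good_comp (T (snd w)) (BlkF (fun k => T (fst w k)))).
  - apply good_T.
  - apply (BlkF_good (zrange K)).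
    + intros; apply good_T.
    + intros k Hk s. rewrite HK. apply T_0.
      destruct (Z_lt_le_dec (Z.of_nat K) (Z.abs k)); auto. exfalso; apply Hk, zrange_in; auto.
Qed.

Lemma W_p0 w : W w (p 0) = p (snd w).
Proof.
  unfold W. rewrite T_p. simpl. rewrite BlkF_out. f_equal.
  intros k. apply p_not_open.
Qed.

Lemma W_inj w w' : (forall s, 0 < s < 1 -> W w s = W w' s) -> w = w'.
Proof.
  intros H. destruct w as [b n], w' as [b' n'].
  assert (En : n = n').
  { pose proof (H (p 0) (p_range 0)) as H0. rewrite !W_p0 in H0. simpl in H0. apply p_inj; auto. }
  subst n'. f_equal. apply functional_extensionality. intros k.
  set (y := A k (p 0)).
  assert (Hy : p k < y < p (k + 1)) by (apply A_open, p_range).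
  assert (Hy01 : 0 < y < 1) by (apply A_01; pose proof (p_range 0); lra).
  pose proof (H (T (- n) y) (T_01 _ _ Hy01)) as E.
  unfold W in E. simpl in E. rewrite !T_add in E. replace (- n + n)%Z with 0%Z in E by lia.
  rewrite !T_0 in E. rewrite !(BlkF_in _ k y Hy) in E. unfold y in E. rewrite Ainv_A in E.
  apply A_inj in E. rewrite !T_p in E. apply p_inj in E. lia.
Qed.

Definition Data := Z -> ZW.
Definition mulD (D D' : Data) : Data := fun k => mulW (D k) (D' k).
Definition invD (D : Data) : Data := fun k => invW (D k).
Definition oneD : Data := fun _ => oneW.

Definition rho (D : Data) (x : R) : R := BlkF (fun k => W (D k)) x.

Lemma rho_mul D D' x : rho (mulD D D') x = rho D (rho D' x).
Proof.
  unfold rho. rewrite BlkF_comp by (intros; apply W_01).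
  apply BlkF_ext. intros. unfold mulD. apply W_mul.
Qed.

Lemma rho_one x : rho oneD x = x.
Proof.
  unfold rho. rewrite <- (BlkF_idf x) at 2. apply BlkF_ext. intros. apply W_one.
Qed.

Lemma rho_inj D D' : (forall x, rho D x = rho D' x) -> D = D'.
Proof.
  intros H. apply functional_extensionality. intros k. apply W_inj. intros s Hs.
  pose proof (H (A k s)) as E. unfold rho in E.
  rewrite !(BlkF_in _ k) in E by (apply A_open; auto). rewrite Ainv_A in E.
  apply A_inj in E. auto.
Qed.

Lemma rho_good D :
  (exists K : nat, forall k, (Z.of_nat K < Z.abs k)%Z -> D k = oneW) ->
  (forall k, exists K : nat, forall j, (Z.of_nat K < Z.abs j)%Z -> fst (D k) j = 0%Z) ->
  good (rho D).
Proof.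
  intros [K HK] Hf. unfold rho. apply (BlkF_good (zrange K)).
  - intros k. apply W_good. apply Hf.
  - intros k Hk s. rewrite HK. apply W_one.
    destruct (Z_lt_le_dec (Z.of_nat K) (Z.abs k)); auto. exfalso; apply Hk, zrange_in; auto.
Qed.

Lemma rho_eval D k0 j0 s : 0 < s < 1 -> snd (D k0) = 0%Z ->
  rho D (A k0 (A j0 s)) = A k0 (A j0 (T (fst (D k0) j0) s)).
Proof.
  intros Hs Hn. unfold rho.
  assert (H1 : 0 < A j0 s < 1) by (apply A_01; lra).
  rewrite (BlkF_in _ k0) by (apply A_open; auto). rewrite Ainv_A. f_equal.
  unfold W. rewrite Hn. rewrite T_0. rewrite (BlkF_in _ j0) by (apply A_open; auto).
  rewrite Ainv_A. reflexivity.
Qed.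

From HB Require Import structures.
From mathcomp Require Import all_boot.
From mathcomp Require Import zify.


Lemma powerRZ_2 (k N : nat) : powerRZ 2 (Z.of_nat k - Z.of_nat N) = 2 ^ k / 2 ^ N.
Proof.
  unfold Z.sub. rewrite (powerRZ_add 2 _ _ ltac:(lra)). rewrite powerRZ_neg'. rewrite -!pow_powerRZ.
  reflexivity.
Qed.

Lemma gridPL_dyadic (closed : bool) N f : gridPL N f -> dyadic_PL closed f.
Proof.
  intros HG.
  assert (Hch : forall i : nat, exists eb : Z * R,
    INR i + 1 <= 2 ^ N -> dyadic eb.2 /\
      forall x, INR i <= x * 2 ^ N <= INR i + 1 -> f x = powerRZ 2 eb.1 * x + eb.2).
  { intros i. destruct (excluded_middle_informative (INR i + 1 <= 2 ^ N)) as [Hi|Hi].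
    - destruct (HG i Hi) as [k [b [z [Hk [Hz Hf]]]]].
      exists ((Z.of_nat k - Z.of_nat N)%Z, b). intros _. simpl. split.
      + exists z, N. rewrite <- Hz. pose proof (pow2_pos N). field. lra.
      + intros x Hx. rewrite powerRZ_2. apply Hf; auto.
    - exists (0%Z, 0). intros H; contradiction. }
  set (eb := fun i => proj1_sig (constructive_indefinite_description _ (Hch i))).
  assert (Heb : forall i, INR i + 1 <= 2 ^ N -> dyadic (eb i).2 /\
      forall x, INR i <= x * 2 ^ N <= INR i + 1 -> f x = powerRZ 2 (eb i).1 * x + (eb i).2).
  { intros i. exact (proj2_sig (constructive_indefinite_description _ (Hch i))). }
  pose proof (pow2_pos N) as HPN.
  exists (Nat.pow 2 N), (fun i => INR i / 2 ^ N), (fun i => (eb i).1), (fun i => (eb i).2).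
  assert (Hlt : forall i, (i < Nat.pow 2 N)%nat -> INR i + 1 <= 2 ^ N).
  { intros i Hi. move/ltP: Hi => Hi. apply le_INR in Hi. rewrite S_INR INR_pow2 in Hi. lra. }
  split; [|split; [|split; [|split; [|split]]]].
  - simpl. unfold Rdiv. ring.
  - rewrite INR_pow2. field. lra.
  - intros i Hi. rewrite S_INR. apply Rmult_lt_compat_r. apply Rinv_0_lt_compat; lra. lra.
  - intros i Hi. exists (Z.of_nat i), N. rewrite <- INR_IZR_INZ. reflexivity.
  - intros i Hi. apply (Heb i (Hlt i Hi)).
  - intros i x Hi H1 H2. apply (Heb i (Hlt i Hi)).
    assert (H3 : x <= INR (S i) / 2 ^ N) by (destruct closed; lra).
    rewrite S_INR in H3. split.
    + apply (Rmult_le_reg_r (/ 2 ^ N)). apply Rinv_0_lt_compat; lra.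
      replace (x * 2 ^ N * / 2 ^ N) with x by (field; lra). exact H1.
    + apply (Rmult_le_reg_r (/ 2 ^ N)). apply Rinv_0_lt_compat; lra.
      replace (x * 2 ^ N * / 2 ^ N) with x by (field; lra). exact H3.
Qed.

Lemma good_to_F f : good f -> thompsonF f.
Proof.
  intros Hg. pose proof Hg as [H1 [H2 [H3 [H4 [N H5]]]]].
  split; [|split; [|split; [|split]]]; auto.
  - intros x y Hx Hy E. destruct (Rtotal_order x y) as [h|[h|h]]; auto.
    + pose proof (H2 x y ltac:(lra) h ltac:(lra)). lra.
    + pose proof (H2 y x ltac:(lra) h ltac:(lra)). lra.
  - eapply gridPL_dyadic; eauto.
Qed.

Lemma good_to_V f : good f -> thompsonV f.
Proof.
  intros Hg. pose proof (good_1 f Hg) as E1. pose proof Hg as [H1 [H2 [H3 [H4 [N H5]]]]].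
  split; [|split; [|split; [|split]]].
  - intros x [Hx|Hx]. apply H1; auto. destruct (Req_dec x 1). subst; auto. apply H1; right; lra.
  - intros x Hx. pose proof (H3 x ltac:(lra)). pose proof (H2 x 1 ltac:(lra) ltac:(lra) ltac:(lra)). lra.
  - intros x y Hx Hy E. destruct (Rtotal_order x y) as [h|[h|h]]; auto.
    + pose proof (H2 x y ltac:(lra) h ltac:(lra)). lra.
    + pose proof (H2 y x ltac:(lra) h ltac:(lra)). lra.
  - intros y Hy. destruct (H4 y ltac:(lra)) as [x [Hx Ex]]. exists x. split; auto.
    split; [lra|]. destruct (Req_dec x 1); [subst; lra|lra].
  - eapply gridPL_dyadic; eauto.
Qed.

Lemma good_to_T f : good f -> thompsonT f.
Proof.
  intros Hg. split. apply good_to_V; auto.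
  pose proof Hg as [H1 [H2 _]].
  intros x y z Hx Hxy Hyz Hz. left. split; apply H2; lra.
Qed.

Close Scope R_scope.

HB.instance Definition _ := Monoid.isComLaw.Build Z 0%Z Z.add Z.add_assoc Z.add_comm Z.add_0_l.

Lemma ZW_eq (w w' : ZW) : (forall j, fst w j = fst w' j) -> snd w = snd w' -> w = w'.
Proof.
  case: w => b m; case: w' => b' m' /= H1 H2. subst m'. f_equal.
  by apply functional_extensionality.
Qed.

Lemma mulW_1l w : mulW oneW w = w.
Proof. apply ZW_eq => /= [j|]; [f_equal; lia | lia]. Qed.
Lemma mulW_1r w : mulW w oneW = w.
Proof. apply ZW_eq => /= [j|]; lia. Qed.
Lemma mulW_A a b d : mulW (mulW a b) d = mulW a (mulW b d).
Proof.
  apply ZW_eq => /= [j|]; [|lia].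
  have -> : (j - (snd a + snd b) = j - snd a - snd b)%Z by lia. lia.
Qed.
Lemma mulW_V w : mulW w (invW w) = oneW.
Proof. apply ZW_eq => /= [j|]; [|lia]. have -> : (j - snd w + snd w = j)%Z by lia. lia. Qed.
Lemma mulW_Vl w : mulW (invW w) w = oneW.
Proof. apply ZW_eq => /= [j|]; [|lia]. have -> : (j - - snd w = j + snd w)%Z by lia. lia. Qed.

Lemma mulD_1l D : mulD oneD D = D.
Proof. apply functional_extensionality => k. apply mulW_1l. Qed.
Lemma mulD_1r D : mulD D oneD = D.
Proof. apply functional_extensionality => k. apply mulW_1r. Qed.
Lemma mulD_A a b d : mulD (mulD a b) d = mulD a (mulD b d).
Proof. apply functional_extensionality => k. apply mulW_A. Qed.
Lemma mulD_V D : mulD D (invD D) = oneD.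
Proof. apply functional_extensionality => k. apply mulW_V. Qed.
Lemma mulD_Vl D : mulD (invD D) D = oneD.
Proof. apply functional_extensionality => k. apply mulW_Vl. Qed.

Lemma rhoF_mul D D' : rho (mulD D D') = compf (rho D) (rho D').
Proof. apply functional_extensionality => x. apply rho_mul. Qed.
Lemma rhoF_one : rho oneD = idf.
Proof. apply functional_extensionality => x. apply rho_one. Qed.

Inductive agen (L : list Data) : Data -> Prop :=
| ag_one : agen L oneD
| ag_elt d : In d L -> agen L d
| ag_inv d : In d L -> agen L (invD d)
| ag_mul d e : agen L d -> agen L e -> agen L (mulD d e).

Lemma invD_mul a b : invD (mulD a b) = mulD (invD b) (invD a).
Proof.
  have H : mulD (mulD a b) (mulD (invD b) (invD a)) = oneD.
  { by rewrite -mulD_A (mulD_A a b) mulD_V mulD_1r mulD_V. }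
  by rewrite -[invD (mulD a b)]mulD_1r -H -mulD_A mulD_Vl mulD_1l.
Qed.

Lemma invD_inv a : invD (invD a) = a.
Proof. by rewrite -[invD (invD a)]mulD_1r -(mulD_Vl a) -mulD_A mulD_Vl mulD_1l. Qed.

Lemma invD_one : invD oneD = oneD.
Proof. by rewrite -[invD oneD]mulD_1l mulD_V. Qed.

Lemma agen_inv L d : agen L d -> agen L (invD d).
Proof.
  elim => [|e He|e He|a b _ Ha _ Hb].
  - rewrite invD_one; constructor.
  - by apply ag_inv.
  - rewrite invD_inv; by apply ag_elt.
  - rewrite invD_mul. by apply ag_mul.
Qed.

Lemma agen_rho L d : agen L d -> gen_by (fun g => In g (List.map rho L)) (rho d).
Proof.
  elim => [|e He|e He|a b _ Ha _ Hb].
  - rewrite rhoF_one. constructor.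
  - apply gen_elt. by apply in_map.
  - apply (@gen_inv _ _ (rho e)). by apply in_map.
    + by rewrite -rhoF_mul mulD_V rhoF_one.
    + by rewrite -rhoF_mul mulD_Vl rhoF_one.
  - rewrite rhoF_mul. by apply gen_comp.
Qed.

Definition zeroF : Z -> Z := fun _ => 0%Z.

Definition bnd (D : Data) : Prop :=
  exists K : nat, forall k, ((Z.of_nat K < Z.abs k)%Z -> D k = oneW) /\
    (Z.abs (snd (D k)) <= Z.of_nat K)%Z /\
    (forall j, (Z.of_nat K < Z.abs j)%Z -> fst (D k) j = 0%Z).

Lemma bnd_one : bnd oneD.
Proof. exists 0%nat => k. split; [done|]. split; [simpl; lia|done]. Qed.

Lemma bnd_mul D D' : bnd D -> bnd D' -> bnd (mulD D D').
Proof.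
  move=> [K HK] [K' HK']. exists (K + K')%nat => k.
  have [H1 [H2 H3]] := HK k. have [H1' [H2' H3']] := HK' k.
  split; [|split].
  - move=> Hk. have E1 : D k = oneW by apply H1; lia.
    have E2 : D' k = oneW by apply H1'; lia.
    rewrite /mulD E1 E2; apply mulW_1l.
  - rewrite /mulD /mulW /=. lia.
  - move=> j Hj. rewrite /mulD /mulW /=. have E1 := H3 j. have E2 := H3' (j - snd (D k))%Z. lia.
Qed.

Lemma bnd_inv D : bnd D -> bnd (invD D).
Proof.
  move=> [K HK]. exists (K + K)%nat => k.
  have [H1 [H2 H3]] := HK k.
  split; [|split].
  - move=> Hk. have E1 : D k = oneW by apply H1; lia.
    rewrite /invD E1. apply ZW_eq => /= [j|]; lia.
  - rewrite /invD /invW /=. lia.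
  - move=> j Hj. rewrite /invD /invW /=. have E1 := H3 (j + snd (D k))%Z. lia.
Qed.

Lemma bnd_good D : bnd D -> good (rho D).
Proof.
  move=> [K HK]. apply rho_good.
  - exists K => k Hk. by apply HK.
  - move=> k. exists K => j Hj. by apply HK.
Qed.

Lemma zsum_split (T : finType) (P : pred T) (F G : T -> Z) :
  \big[Z.add/0%Z]_(l in P) (F l + G l)%Z = (\big[Z.add/0%Z]_(l in P) F l + \big[Z.add/0%Z]_(l in P) G l)%Z.
Proof. by rewrite big_split. Qed.

Lemma zsum_opp (T : finType) (P : pred T) (F : T -> Z) :
  \big[Z.add/0%Z]_(l in P) (- F l)%Z = (- \big[Z.add/0%Z]_(l in P) F l)%Z.
Proof.
  apply: (big_ind2 (fun a b => a = (- b)%Z)) => //.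
  move=> a b x y -> ->. lia.
Qed.

Lemma zsum0 (T : finType) (P : pred T) (F : T -> Z) :
  (forall l, P l -> F l = 0%Z) -> \big[Z.add/0%Z]_(l in P) F l = 0%Z.
Proof. move=> H. by apply big1. Qed.

Section Config.
Variables (n : nat) (c : {set 'I_n} -> bool).

Definition slot := ({set 'I_n} * option 'I_n)%type.
Definition sl (s : slot) : Z := Z.of_nat (enum_rank s).

Lemma sl_inj s s' : sl s = sl s' -> s = s'.
Proof. rewrite /sl => H. apply: enum_rank_inj. apply: ord_inj. lia. Qed.

Lemma sl_nonneg s : (0 <= sl s)%Z.
Proof. rewrite /sl; lia. Qed.

Definition valid (i : 'I_n) (D : Data) : Prop :=
  bnd D /\
  (forall k, (forall s : slot, sl s <> k) -> D k = oneW) /\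
  (forall (J : {set 'I_n}) (r : option 'I_n), ~~ (c J && (i \in J)) -> D (sl (J, r)) = oneW) /\
  (forall J : {set 'I_n}, c J -> i \in J ->
     snd (D (sl (J, None))) = \big[Z.add/0%Z]_(l in J) snd (D (sl (J, Some l))) /\
     (forall l, fst (D (sl (J, Some l))) = zeroF) /\
     (forall l, l \notin J -> D (sl (J, Some l)) = oneW) /\
     snd (D (sl (J, Some i))) = 0%Z).

Lemma valid_one i : valid i oneD.
Proof.
  split; [apply bnd_one|]. split; [done|]. split; [done|].
  move=> J _ _. split; [|split; [done|split; done]].
  rewrite /= zsum0 //.
Qed.

Lemma valid_mul i D D' : valid i D -> valid i D' -> valid i (mulD D D').
Proof.
  move=> [B [N [Z1 Z2]]] [B' [N' [Z1' Z2']]].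
  split; [by apply bnd_mul|]. split; [|split].
  - move=> k Hk. by rewrite /mulD N // N' // mulW_1l.
  - move=> J r Hr. by rewrite /mulD Z1 // Z1' // mulW_1l.
  - move=> J HJ Hi. have [S1 [S2 [S3 S4]]] := Z2 J HJ Hi. have [S1' [S2' [S3' S4']]] := Z2' J HJ Hi.
    split; [|split; [|split]].
    + rewrite /mulD /mulW /= S1 S1' -zsum_split. done.
    + move=> l. rewrite /mulD /mulW /= S2 S2'. apply functional_extensionality => j. done.
    + move=> l Hl. by rewrite /mulD S3 // S3' // mulW_1l.
    + rewrite /mulD /mulW /= S4 S4'. done.
Qed.

Lemma valid_inv i D : valid i D -> valid i (invD D).
Proof.
  move=> [B [N [Z1 Z2]]].
  split; [by apply bnd_inv|]. split; [|split].
  - move=> k Hk. have E := N k Hk. rewrite /invD E. apply ZW_eq => /= [j|]; lia.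
  - move=> J r Hr. have E := Z1 J r Hr. rewrite /invD E. apply ZW_eq => /= [j|]; lia.
  - move=> J HJ Hi. have [S1 [S2 [S3 S4]]] := Z2 J HJ Hi.
    split; [|split; [|split]].
    + rewrite /invD /invW /= S1 -zsum_opp. done.
    + move=> l. rewrite /invD /invW /= S2. apply functional_extensionality => j. done.
    + move=> l Hl. have E := S3 l Hl. rewrite /invD E. apply ZW_eq => /= [j|]; lia.
    + rewrite /invD /invW /= S4. done.
Qed.

Definition Hs (i : 'I_n) : (R -> R) -> Prop := fun f => exists D, valid i D /\ f = rho D.

Lemma Hs_subgroup (G : (R -> R) -> Prop) : (forall f, good f -> G f) ->
  forall i, is_subgroup G (Hs i).
Proof.
  move=> HG i. split; [|split; [|split]].
  - move=> f [D [[B _] ->]]. apply HG. by apply bnd_good.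
  - exists oneD. split; [apply valid_one| by rewrite rhoF_one].
  - move=> f g [D [HD ->]] [D' [HD' ->]]. exists (mulD D D'). split; [by apply valid_mul|].
    by rewrite rhoF_mul.
  - move=> f [D [HD ->]]. exists (rho (invD D)). split; [exists (invD D); split; [by apply valid_inv|done]|].
    split; by rewrite -rhoF_mul ?mulD_V ?mulD_Vl rhoF_one.
Qed.

Lemma cap_char (I : {set 'I_n}) f : I != set0 ->
  (bigcapH Hs I f <-> exists D, (forall i, i \in I -> valid i D) /\ f = rho D).
Proof.
  move=> HI. split.
  - move=> H. have [i0 Hi0] := set0Pn I HI.
    have [D0 [HD0 E0]] := H i0 Hi0. exists D0. split; [|done].
    move=> i Hi. have [D [HD E]] := H i Hi.
    have ED : D = D0.
    { apply rho_inj => x. by rewrite -E -E0. }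
    by rewrite -ED.
  - move=> [D [HD ->]] i Hi. exists D. split; [by apply HD|done].
Qed.

End Config.

Definition Qinv (k0 j0 : Z) (f : R -> R) : Prop :=
  forall s : R, Rlt 0 s /\ Rlt s 1 -> f (A k0 (A j0 s)) = A k0 (A j0 s).

Lemma gen_Q k0 j0 (S : (R -> R) -> Prop) f :
  (forall g, S g -> Qinv k0 j0 g) -> gen_by S f -> Qinv k0 j0 f.
Proof.
  move=> HS. elim => [|s Hs|s t Hs E1 E2|f1 g1 _ H1 _ H2] x Hx.
  - done.
  - by apply HS.
  - have Q := HS s Hs x Hx.
    have := f_equal (fun h => h (A k0 (A j0 x))) E2. rewrite /compf /idf Q. done.
  - rewrite /compf H2 // H1 //.
Qed.

Section NonFG.
Variables (n : nat) (c : {set 'I_n} -> bool).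

Lemma common_bound (I : {set 'I_n}) (l : list (R -> R)) : I != set0 ->
  (forall g, In g l -> bigcapH (Hs n c) I g) ->
  exists K : nat, forall g, In g l -> exists D, (forall i, i \in I -> valid n c i D) /\ g = rho D /\
    forall k j, (Z.of_nat K < Z.abs j)%Z -> fst (D k) j = 0%Z.
Proof.
  move=> HI. elim: l => [|g l IH] Hl.
  - exists 0%nat => g [].
  - have [K HK] := IH (fun g' Hg' => Hl g' (or_intror Hg')).
    have [D [HD Eg]] := (proj1 (cap_char n c I g HI)) (Hl g (or_introl erefl)).
    have [i0 Hi0] := set0Pn I HI.
    have [[KD HKD] _] := HD i0 Hi0.
    exists (K + KD)%nat => g' [<-|Hg'].
    + exists D. split; [done|split; [done|]]. move=> k j Hj. apply (HKD k). lia.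
    + have [D' [H1 [H2 H3]]] := HK g' Hg'. exists D'. split; [done|split; [done|]].
      move=> k j Hj. apply H3. lia.
Qed.

Definition Edata (k0 j0 : Z) : Data :=
  fun k => if Z.eq_dec k k0 then ((fun j => if Z.eq_dec j j0 then 1%Z else 0%Z), 0%Z) else oneW.

Lemma Edata_valid (I : {set 'I_n}) j0 i : c I -> i \in I -> valid n c i (Edata (sl n (I, None)) j0).
Proof.
  move=> HcI Hi. set k0 := sl n (I, None).
  have Hk0 := sl_nonneg n (I, None).
  have Hoff : forall s : slot n, s <> (I, None) -> Edata k0 j0 (sl n s) = oneW.
  { move=> s Hs. rewrite /Edata. case: (Z.eq_dec (sl n s) k0) => // E.
    exfalso. apply Hs. by apply (sl_inj n). }
  split; [|split; [|split]].
  - exists (Z.to_nat k0 + Z.to_nat (Z.abs j0))%nat => k. rewrite /Edata.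
    case: (Z.eq_dec k k0) => E.
    + split; [lia|]. split; [simpl; lia|]. move=> j Hj /=. case: (Z.eq_dec j j0) => //. lia.
    + split; [done|]. split; [simpl; lia|done].
  - move=> k Hk. rewrite /Edata. case: (Z.eq_dec k k0) => // E. exfalso. by apply (Hk (I, None)).
  - move=> J r Hr. apply Hoff. move=> [EJ Er]. subst J r. by rewrite HcI Hi in Hr.
  - move=> J HJ HiJ. split; [|split; [|split]].
    + rewrite zsum0.
      * rewrite /Edata. by case: (Z.eq_dec _ _).
      * move=> l _. by rewrite Hoff.
    + move=> l. by rewrite Hoff.
    + move=> l _. by rewrite Hoff.
    + by rewrite Hoff.
Qed.

Lemma valid_k0 (I : {set 'I_n}) D : c I -> I != set0 -> (forall i, i \in I -> valid n c i D) ->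
  snd (D (sl n (I, None))) = 0%Z.
Proof.
  move=> HcI HI HD. have [i0 Hi0] := set0Pn I HI.
  have [_ [_ [_ Z2]]] := HD i0 Hi0. have [S1 _] := Z2 I HcI Hi0. rewrite S1.
  apply zsum0 => l Hl. have [_ [_ [_ Z2']]] := HD l Hl. by have [_ [_ [_ S4]]] := Z2' I HcI Hl.
Qed.

Lemma nonfg (I : {set 'I_n}) : I != set0 -> c I -> ~ fin_gen (bigcapH (Hs n c) I).
Proof.
  move=> HI HcI [l [Hl Hgen]].
  have [K HK] := common_bound I l HI Hl.
  set k0 := sl n (I, None). set j0 := (Z.of_nat K + 1)%Z.
  have HQ : forall g, In g l -> Qinv k0 j0 g.
  { move=> g Hg. destruct (HK g Hg) as [D [HD [Eg HDj]]]. move=> s Hs0. rewrite Eg.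
    rewrite rho_eval //; [|by apply (valid_k0 I)].
    rewrite HDj; [|lia]. by rewrite T_0. }
  have HE : bigcapH (Hs n c) I (rho (Edata k0 j0)).
  { apply (proj2 (cap_char n c I _ HI)). exists (Edata k0 j0). split; [|done].
    move=> i Hi. by apply Edata_valid. }
  have Q := gen_Q k0 j0 _ _ HQ (Hgen _ HE).
  have := Q (p 0) (p_range 0).
  rewrite rho_eval; [| apply p_range | rewrite /Edata; by case: (Z.eq_dec k0 k0)].
  rewrite /Edata. destruct (Z.eq_dec k0 k0) as [e0|ne]; [|done]. simpl.
  destruct (Z.eq_dec j0 j0) as [e1|ne]; [|done].
  rewrite T_p => E. apply A_inj in E. apply A_inj in E. apply p_inj in E. lia.
Qed.

End NonFG.

Definition tdata (v : Z -> Z) : Data := fun k => (zeroF, v k).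
Definition ldata (g : Z -> Z -> Z) : Data := fun k => (g k, 0%Z).

Lemma tdata_mul v w : mulD (tdata v) (tdata w) = tdata (fun k => (v k + w k)%Z).
Proof. apply functional_extensionality => k. apply ZW_eq => //=. Qed.
Lemma tdata_inv v : invD (tdata v) = tdata (fun k => (- v k)%Z).
Proof. apply functional_extensionality => k. apply ZW_eq => //=. Qed.
Lemma tdata_zero : tdata (fun _ => 0%Z) = oneD.
Proof. done. Qed.

Lemma ldata_mul g h : mulD (ldata g) (ldata h) = ldata (fun k j => (g k j + h k j)%Z).
Proof. apply functional_extensionality => k. apply ZW_eq => /= [j|]; [|done]. by rewrite Z.sub_0_r. Qed.
Lemma ldata_inv g : invD (ldata g) = ldata (fun k j => (- g k j)%Z).
Proof. apply functional_extensionality => k. apply ZW_eq => /= [j|]; [|done]. by rewrite Z.add_0_r. Qed.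
Lemma ldata_zero : ldata (fun _ _ => 0%Z) = oneD.
Proof. done. Qed.

Lemma agen_pow_nat L (P : Z -> Data) (mul1 : forall a b, mulD (P a) (P b) = P (a + b)%Z) (P0 : P 0%Z = oneD) :
  agen L (P 1%Z) -> forall d : nat, agen L (P (Z.of_nat d)).
Proof.
  move=> H1. elim => [|d IH]; [rewrite P0; constructor|].
  have -> : Z.of_nat d.+1 = (1 + Z.of_nat d)%Z by lia.
  rewrite -mul1. by apply ag_mul.
Qed.

Lemma tpow L v : agen L (tdata v) -> forall z : Z, agen L (tdata (fun k => (z * v k)%Z)).
Proof.
  move=> H z.
  set P := fun a : Z => tdata (fun k => (a * v k)%Z).
  have mul1 : forall a b, mulD (P a) (P b) = P (a + b)%Z.
  { move=> a b. rewrite /P tdata_mul. f_equal. apply functional_extensionality => k. lia. }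
  have P0 : P 0%Z = oneD.
  { rewrite /P -tdata_zero. f_equal. }
  have P1 : agen L (P 1%Z).
  { rewrite /P. have -> : (fun k => (1 * v k)%Z) = v.
    { apply functional_extensionality => k. lia. }
    done. }
  have Hn := agen_pow_nat L P mul1 P0 P1.
  case: (Z_le_gt_dec 0 z) => Hz.
  - have -> : z = Z.of_nat (Z.to_nat z) by lia. apply Hn.
  - have -> : z = (- Z.of_nat (Z.to_nat (- z)))%Z by lia.
    have E : P (- Z.of_nat (Z.to_nat (- z)))%Z = invD (P (Z.of_nat (Z.to_nat (- z)))).
    { rewrite /P tdata_inv. f_equal. apply functional_extensionality => k. lia. }
    rewrite -/(P _) E. apply agen_inv, Hn.
Qed.

Lemma lpow L g : agen L (ldata g) -> forall z : Z, agen L (ldata (fun k j => (z * g k j)%Z)).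
Proof.
  move=> H z.
  set P := fun a : Z => ldata (fun k j => (a * g k j)%Z).
  have mul1 : forall a b, mulD (P a) (P b) = P (a + b)%Z.
  { move=> a b. rewrite /P ldata_mul. f_equal. apply functional_extensionality => k.
    apply functional_extensionality => j. lia. }
  have P0 : P 0%Z = oneD.
  { rewrite /P -ldata_zero. f_equal. }
  have P1 : agen L (P 1%Z).
  { rewrite /P. have -> : (fun k j => (1 * g k j)%Z) = g.
    { apply functional_extensionality => k. apply functional_extensionality => j. lia. }
    done. }
  have Hn := agen_pow_nat L P mul1 P0 P1.
  case: (Z_le_gt_dec 0 z) => Hz.
  - have -> : z = Z.of_nat (Z.to_nat z) by lia. apply Hn.
  - have -> : z = (- Z.of_nat (Z.to_nat (- z)))%Z by lia.
    have E : P (- Z.of_nat (Z.to_nat (- z)))%Z = invD (P (Z.of_nat (Z.to_nat (- z)))).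
    { rewrite /P ldata_inv. f_equal. apply functional_extensionality => k.
      apply functional_extensionality => j. lia. }
    rewrite -/(P _) E. apply agen_inv, Hn.
Qed.

Lemma tsum_seq L (X : Type) (r : seq X) (F : X -> Z -> Z) : (forall x, agen L (tdata (F x))) ->
  agen L (tdata (fun k => \big[Z.add/0%Z]_(x <- r) F x k)).
Proof.
  move=> H. elim: r => [|x r IH].
  - have -> : (fun k => \big[Z.add/0%Z]_(x <- [::]) F x k) = (fun _ => 0%Z).
    { apply functional_extensionality => k. by rewrite big_nil. }
    rewrite tdata_zero. constructor.
  - have -> : (fun k => \big[Z.add/0%Z]_(y <- x :: r) F y k) =
              (fun k => (F x k + \big[Z.add/0%Z]_(y <- r) F y k)%Z).
    { apply functional_extensionality => k. by rewrite big_cons. }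
    rewrite -tdata_mul. by apply ag_mul.
Qed.

Lemma lsum_seq L (X : Type) (r : seq X) (F : X -> Z -> Z -> Z) : (forall x, agen L (ldata (F x))) ->
  agen L (ldata (fun k j => \big[Z.add/0%Z]_(x <- r) F x k j)).
Proof.
  move=> H. elim: r => [|x r IH].
  - have -> : (fun k j => \big[Z.add/0%Z]_(x <- [::]) F x k j) = (fun _ _ => 0%Z).
    { apply functional_extensionality => k. apply functional_extensionality => j. by rewrite big_nil. }
    rewrite ldata_zero. constructor.
  - have -> : (fun k j => \big[Z.add/0%Z]_(y <- x :: r) F y k j) =
              (fun k j => (F x k j + \big[Z.add/0%Z]_(y <- r) F y k j)%Z).
    { apply functional_extensionality => k. apply functional_extensionality => j. by rewrite big_cons. }
    rewrite -ldata_mul. by apply ag_mul.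
Qed.

Lemma tsum L (X : finType) (F : X -> Z -> Z) : (forall x, agen L (tdata (F x))) ->
  agen L (tdata (fun k => \big[Z.add/0%Z]_(x : X) F x k)).
Proof. move=> H. exact: (tsum_seq L X (index_enum X) F H). Qed.

Lemma lsum L (X : finType) (F : X -> Z -> Z -> Z) : (forall x, agen L (ldata (F x))) ->
  agen L (ldata (fun k j => \big[Z.add/0%Z]_(x : X) F x k j)).
Proof. move=> H. exact: (lsum_seq L X (index_enum X) F H). Qed.

Lemma decompD D : D = mulD (ldata (fun k => fst (D k))) (tdata (fun k => snd (D k))).
Proof.
  apply functional_extensionality => k. apply ZW_eq => /= [j|]; [|done]. rewrite /zeroF. lia.
Qed.

Lemma In_mem (T : eqType) (x : T) (s : seq T) : In x s <-> x \in s.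
Proof.
  elim: s => [|y s IH] /=; [split; done|].
  rewrite in_cons. split.
  - move=> [->|H]; [by rewrite eqxx|]. apply/orP; right; by apply IH.
  - move/orP => [/eqP ->|H]; [by left|right; by apply IH].
Qed.

Definition ind (a b : Z) : Z := if Z.eq_dec a b then 1%Z else 0%Z.

Lemma ind_same a : ind a a = 1%Z.
Proof. rewrite /ind. by case: (Z.eq_dec a a). Qed.
Lemma ind_diff a b : a <> b -> ind a b = 0%Z.
Proof. rewrite /ind. by case: (Z.eq_dec a b). Qed.

Section FG.
Variables (n : nat) (c : {set 'I_n} -> bool) (I : {set 'I_n}).
Hypotheses (HI : I != set0) (HcI : c I = false).

Definition cond (J : {set 'I_n}) := c J && (I \subset J).
Definition kN J := sl n (J, None).
Definition kS J l := sl n (J, Some l).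

Lemma ind_sl (s s' : slot n) : ind (sl n s) (sl n s') = (if s == s' then 1 else 0)%Z.
Proof.
  rewrite /ind. case: (Z.eq_dec _ _) => E; case: eqP => E' //.
  - exfalso. apply E'. by apply sl_inj.
  - exfalso. apply E. by rewrite E'.
Qed.

Definition lampD J : Data := fun k => if Z.eq_dec k (kN J) then ((fun j => ind j 0), 0%Z) else oneW.
Definition vv J l : Z -> Z := fun k => (ind k (kN J) + ind k (kS J l))%Z.
Definition genD J l : Data := tdata (vv J l).

Definition gens : list Data :=
  flat_map (fun J => lampD J :: List.map (genD J) (enum (J :\: I))) (enum [set J | cond J]).

Lemma gens_lamp J : cond J -> In (lampD J) gens.
Proof.
  move=> H. apply in_flat_map. exists J. split; [|by left].
  apply In_mem. by rewrite mem_enum inE.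
Qed.

Lemma gens_gen J l : cond J -> l \in J :\: I -> In (genD J l) gens.
Proof.
  move=> H Hl. apply in_flat_map. exists J. split.
  - apply In_mem. by rewrite mem_enum inE.
  - right. apply in_map. apply In_mem. by rewrite mem_enum.
Qed.

Lemma gens_inv d : In d gens ->
  exists J, cond J /\ (d = lampD J \/ exists l, l \in J :\: I /\ d = genD J l).
Proof.
  move/in_flat_map => [J [HJ Hd]]. move/In_mem: HJ. rewrite mem_enum inE => HJ.
  exists J. split; [done|]. case: Hd => [<-|]; [by left|].
  move/in_map_iff => [l [<- Hl]]. right. exists l. split; [|done]. move/In_mem: Hl. by rewrite mem_enum.
Qed.

Lemma kN_kS J J' l : kN J <> kS J' l.
Proof. rewrite /kN /kS => E. by have := sl_inj n _ _ E. Qed.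

Lemma lampD_valid J i : cond J -> i \in I -> valid n c i (lampD J).
Proof.
  move=> /andP [HcJ HIJ] Hi.
  have HiJ : i \in J by apply: (subsetP HIJ).
  have Hk0 := sl_nonneg n (J, None).
  have Hoff : forall s : slot n, s <> (J, None) -> lampD J (sl n s) = oneW.
  { move=> s Hs. rewrite /lampD. case: (Z.eq_dec (sl n s) (kN J)) => // E.
    exfalso. apply Hs. by apply (sl_inj n). }
  split; [|split; [|split]].
  - exists (Z.to_nat (kN J) + 1)%nat => k. rewrite /lampD.
    case: (Z.eq_dec k (kN J)) => E.
    + have E' : k = sl n (J, None) := E. split; [lia|]. split; [simpl; lia|]. move=> j Hj /=. apply ind_diff. lia.
    + split; [done|]. split; [simpl; lia|done].
  - move=> k Hk. rewrite /lampD. case: (Z.eq_dec k (kN J)) => // E. exfalso. by apply (Hk (J, None)).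
  - move=> J' r Hr. apply Hoff. move=> [EJ Er]. subst J' r. by rewrite HcJ HiJ in Hr.
  - move=> J' HJ' HiJ'. split; [|split; [|split]].
    + rewrite zsum0.
      * rewrite /lampD. by case: (Z.eq_dec _ _).
      * move=> l _. by rewrite Hoff.
    + move=> l. by rewrite Hoff.
    + move=> l _. by rewrite Hoff.
    + by rewrite Hoff.
Qed.

Lemma vv_sl J l (s : slot n) : vv J l (sl n s) =
  ((if s == (J, None) then 1 else 0) + (if s == (J, Some l) then 1 else 0))%Z.
Proof. by rewrite /vv /kN /kS !ind_sl. Qed.

Lemma vv_N J l J' : vv J l (kN J') = (if J' == J then 1 else 0)%Z.
Proof.
  rewrite /kN vv_sl. have -> : ((J', None) == (J, Some l)) = false.
  { by rewrite xpair_eqE andbF. }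
  rewrite xpair_eqE andbT. case: (J' == J); done.
Qed.

Lemma vv_S J l J' l' : vv J l (kS J' l') = (if (J' == J) && (l' == l) then 1 else 0)%Z.
Proof.
  rewrite /kS vv_sl. have -> : ((J', Some l') == (J, None)) = false.
  { by rewrite xpair_eqE andbF. }
  have -> : ((J', Some l') == (J, Some l)) = (J' == J) && (l' == l).
  { by rewrite xpair_eqE. }
  by case: (_ && _).
Qed.

Lemma genD_valid J l i : cond J -> l \in J :\: I -> i \in I -> valid n c i (genD J l).
Proof.
  move=> /andP [HcJ HIJ] Hl Hi.
  have HiJ : i \in J by apply: (subsetP HIJ).
  move: Hl; rewrite inE => /andP [HlI HlJ].
  have Hli : l != i by apply/eqP => E; subst; rewrite Hi in HlI.
  have Hvv0 : forall k, (forall s : slot n, sl n s <> k) -> vv J l k = 0%Z.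
  { move=> k Hk. have H1 := Hk (J, Some l). have H2 := Hk (J, None).
    rewrite /vv !ind_diff //; rewrite /kN /kS; auto. }
  have HD : forall k, vv J l k = 0%Z -> genD J l k = oneW.
  { move=> k E. rewrite /genD /tdata E. done. }
  split; [|split; [|split]].
  - exists (Z.to_nat (kN J) + Z.to_nat (kS J l) + 2)%nat => k.
    have Hk1 : (0 <= kN J)%Z := sl_nonneg n _. have Hk2 : (0 <= kS J l)%Z := sl_nonneg n _.
    split; [|split].
    + move=> Hk. apply HD. rewrite /vv !ind_diff //; lia.
    + have Hv : (Z.abs (vv J l k) <= 2)%Z.
      { rewrite /vv /ind. destruct (Z.eq_dec k (kN J)); destruct (Z.eq_dec k (kS J l)); simpl; lia. }
      eapply Z.le_trans; [exact Hv|lia].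
    + done.
  - move=> k Hk. by apply HD, Hvv0.
  - move=> J' r Hr. apply HD. case: r => [l'|].
    + rewrite -/(kS J' l') vv_S. case: eqP => [E|]; [|done]. subst. by rewrite HcJ HiJ in Hr.
    + rewrite -/(kN J') vv_N. case: eqP => [E|]; [|done]. subst. by rewrite HcJ HiJ in Hr.
  - move=> J' HJ' HiJ'. split; [|split; [|split]].
    + change (vv J l (kN J') = \big[Z.add/0%Z]_(l0 in J') vv J l (kS J' l0)).
      rewrite vv_N. case: (eqVneq J' J) => [EJ|NJ].
      * subst J'. rewrite (bigD1 l) // vv_S !eqxx /=. rewrite zsum0; [done|].
        move=> l' /andP [_ Hl']. rewrite vv_S eqxx /=. by rewrite (negbTE Hl').
      * rewrite zsum0 //. move=> l' _. by rewrite vv_S (negbTE NJ).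
    + move=> l'. done.
    + move=> l' Hl'. apply HD. rewrite -/(kS J' l') vv_S.
      case: (eqVneq J' J) => [EJ|NJ] /=; [|done]. subst J'.
      case: eqP => [E|]; [subst; by rewrite HlJ in Hl'|done].
    + change (vv J l (kS J' i) = 0%Z). rewrite vv_S.
      case: (J' == J); [|done]. simpl. case: eqP => [E|]; [|done].
      subst. by rewrite eqxx in Hli.
Qed.

End FG.

Lemma zsum0T (T : finType) (F : T -> Z) :
  (forall l, F l = 0%Z) -> \big[Z.add/0%Z]_(l : T) F l = 0%Z.
Proof. move=> H. by apply big1. Qed.

Lemma sum_single (T : finType) (a : T) (F : T -> Z) :
  (forall x, x != a -> F x = 0%Z) -> \big[Z.add/0%Z]_(x : T) F x = F a.
Proof.
  move=> H. rewrite (bigD1 a) //= big1 ?Z.add_0_r //.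
Qed.

Section Core.
Variables (n : nat) (c : {set 'I_n} -> bool) (I : {set 'I_n}).
Hypotheses (HI : I != set0) (HcI : c I = false).
Variable D : Data.
Hypothesis HD : forall i, i \in I -> valid n c i D.

Let i0 := xchoose (set0Pn I HI).
Let Hi0 : i0 \in I := xchooseP (set0Pn I HI).

Lemma off_cond J r : ~~ cond n c I J -> D (sl n (J, r)) = oneW.
Proof.
  rewrite /cond negb_and => H.
  case/orP: H => H.
  - have [_ [_ [Z1 _]]] := HD i0 Hi0. apply Z1. by rewrite (negbTE H).
  - case/subsetPn: H => i Hi HiJ. have [_ [_ [Z1 _]]] := HD i Hi. apply Z1.
    by rewrite (negbTE HiJ) andbF.
Qed.

Lemma nonslot k : (forall s : slot n, sl n s <> k) -> D k = oneW.
Proof. have [_ [N _]] := HD i0 Hi0. by apply N. Qed.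

Definition coef J l : Z :=
  if cond n c I J && (l \in J) && (l \notin I) then snd (D (kS n J l)) else 0%Z.

Lemma ind_bool (b : bool) (z : Z) : (z * (if b then 1 else 0))%Z = (if b then z else 0)%Z.
Proof. case: b; lia. Qed.

Lemma Dt_eq k : snd (D k) =
  \big[Z.add/0%Z]_(J : {set 'I_n}) \big[Z.add/0%Z]_(l : 'I_n) (coef J l * vv n J l k)%Z.
Proof.
  case: (classic (exists s : slot n, sl n s = k)) => [[[J0 [l0|]] <-]|Hns].
  -
    rewrite -/(kS n J0 l0).
    rewrite (sum_single _ J0); last first.
    { move=> J NJ. rewrite zsum0T // => l. rewrite vv_S eq_sym (negbTE NJ) /=. lia. }
    rewrite (sum_single _ l0); last first.
    { move=> l Nl. rewrite vv_S eqxx /= eq_sym (negbTE Nl) /=. lia. }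
    rewrite vv_S !eqxx /= Z.mul_1_r.
    rewrite /coef. case E: (cond n c I J0); last first.
    { by rewrite off_cond ?E. }
    move: E => /andP [HcJ HIJ] /=.
    case: (boolP (l0 \in J0)) => Hl0J /=.
    + case: (boolP (l0 \in I)) => Hl0I /=.
      * have [_ [_ [_ Z2]]] := HD l0 Hl0I. have [_ [_ [_ S4]]] := Z2 J0 HcJ Hl0J.
        rewrite /kS S4. lia.
      * lia.
    + have HiJ : i0 \in J0 by apply: (subsetP HIJ).
      have [_ [_ [_ Z2]]] := HD i0 Hi0. have [_ [_ [S3 _]]] := Z2 J0 HcJ HiJ.
      by rewrite S3.
  -
    rewrite -/(kN n J0).
    rewrite (sum_single _ J0); last first.
    { move=> J NJ. rewrite zsum0T // => l. rewrite vv_N eq_sym (negbTE NJ). lia. }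
    have -> : \big[Z.add/0%Z]_(l : 'I_n) (coef J0 l * vv n J0 l (kN n J0))%Z =
              \big[Z.add/0%Z]_(l : 'I_n) coef J0 l.
    { apply eq_bigr => l _. rewrite vv_N eqxx. lia. }
    case E: (cond n c I J0); last first.
    { rewrite off_cond ?E //. rewrite zsum0T // => l. rewrite /coef E. done. }
    move: (E) => /andP [HcJ HIJ].
    have HiJ : i0 \in J0 by apply: (subsetP HIJ).
    have [_ [_ [_ Z2]]] := HD i0 Hi0. have [S1 _] := Z2 J0 HcJ HiJ.
    rewrite S1 big_mkcond. apply eq_bigr => l _.
    rewrite /coef E /=. case: (boolP (l \in J0)) => HlJ /=; [|done].
    case: (boolP (l \in I)) => HlI /=; [|done].
    have [_ [_ [_ Z2']]] := HD l HlI. have [_ [_ [_ S4]]] := Z2' J0 HcJ HlJ. exact S4.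
  - rewrite nonslot; last first.
    { move=> s Hs. apply Hns. by exists s. }
    rewrite zsum0T // => J. rewrite zsum0T // => l.
    rewrite /vv !ind_diff; [lia| |].
    + move=> E. apply Hns. exists (J, Some l). done.
    + move=> E. apply Hns. exists (J, None). done.
Qed.

Lemma Dt_agen : agen (gens n c I) (tdata (fun k => snd (D k))).
Proof.
  have -> : (fun k => snd (D k)) = (fun k =>
     \big[Z.add/0%Z]_(J : {set 'I_n}) \big[Z.add/0%Z]_(l : 'I_n) (coef J l * vv n J l k)%Z).
  { apply functional_extensionality => k. apply Dt_eq. }
  apply tsum => J. apply tsum => l.
  rewrite /coef. case E: (cond n c I J && (l \in J) && (l \notin I)).
  - apply tpow. apply ag_elt. move: E => /andP [/andP [H1 H2] H3].
    apply gens_gen => //. by rewrite inE H2 H3.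
  - have -> : (fun k => (0 * vv n J l k)%Z) = (fun _ => 0%Z).
    { apply functional_extensionality => k. lia. }
    rewrite tdata_zero. constructor.
Qed.

End Core.

Section Core2.
Variables (n : nat) (c : {set 'I_n} -> bool) (I : {set 'I_n}).
Hypotheses (HI : I != set0) (HcI : c I = false).

Lemma exists_l0 J : cond n c I J -> exists l0, l0 \in J :\: I.
Proof.
  move=> /andP [HcJ HIJ]. apply/set0Pn. apply/negP => /eqP E.
  move: E => /eqP. rewrite setD_eq0 => HJI.
  have EJ : J = I by apply/eqP; rewrite eqEsubset HJI HIJ.
  by rewrite EJ HcI in HcJ.
Qed.

Definition tK (K : nat) (t : 'I_(K + K + 1)) : Z := (Z.of_nat t - Z.of_nat K)%Z.
Definition eJ (K : nat) J (t : 'I_(K + K + 1)) : Z -> Z -> Z :=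
  fun k j => (ind k (kN n J) * ind j (tK K t))%Z.

Lemma conj_agen K J t : cond n c I J -> agen (gens n c I) (ldata (eJ K J t)).
Proof.
  move=> HJ. have [l0 Hl0] := exists_l0 J HJ.
  have -> : ldata (eJ K J t) = mulD (mulD (tdata (fun k => (tK K t * vv n J l0 k)%Z)) (lampD n J))
                                   (tdata (fun k => (- tK K t * vv n J l0 k)%Z)).
  { apply functional_extensionality => k. rewrite /mulD /mulW /tdata /ldata /lampD /eJ /zeroF.
    destruct (Z.eq_dec k (kN n J)) as [E|NE].
    - subst k. have Hv : vv n J l0 (kN n J) = 1%Z by rewrite vv_N eqxx.
      rewrite Hv ind_same. apply ZW_eq => [j|] /=; [|lia].
      rewrite /ind. destruct (Z.eq_dec j (tK K t)); destruct (Z.eq_dec (j - tK K t * 1) 0); simpl; lia.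
    - rewrite ind_diff //. apply ZW_eq => [j|] /=; lia. }
  apply ag_mul; [apply ag_mul|].
  - apply tpow. apply ag_elt. by apply gens_gen.
  - apply ag_elt. by apply gens_lamp.
  - apply tpow. apply ag_elt. by apply gens_gen.
Qed.

Variable D : Data.
Hypothesis HD : forall i, i \in I -> valid n c i D.

Let i0 := xchoose (set0Pn I HI).
Let Hi0 : i0 \in I := xchooseP (set0Pn I HI).

Lemma Dl_agen : agen (gens n c I) (ldata (fun k => fst (D k))).
Proof.
  have [[K HK] _] := HD i0 Hi0.
  set cL := fun J (t : 'I_(K + K + 1)) => if cond n c I J then fst (D (kN n J)) (tK K t) else 0%Z.
  have -> : (fun k => fst (D k)) = (fun k j =>
     \big[Z.add/0%Z]_(J : {set 'I_n}) \big[Z.add/0%Z]_(t : 'I_(K + K + 1)) (cL J t * eJ K J t k j)%Z).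
  { apply functional_extensionality => k. apply functional_extensionality => j.
    case: (classic (exists s : slot n, sl n s = k)) => [[[J0 [l0|]] Ek]|Hns].
    - rewrite zsum0T => [|J]; last first.
      { rewrite zsum0T // => t. rewrite /eJ ind_diff; [lia|]. rewrite -Ek. apply not_eq_sym, kN_kS. }
      rewrite -Ek.
      case: (boolP (c J0 && (i0 \in J0))) => H.
      + move: H => /andP [H1 H2]. have [_ [_ [_ Z2]]] := HD i0 Hi0.
        have [_ [S2 _]] := Z2 J0 H1 H2. by rewrite S2.
      + have [_ [_ [Z1 _]]] := HD i0 Hi0. by rewrite Z1.
    - rewrite -Ek -/(kN n J0).
      rewrite (sum_single _ J0); last first.
      { move=> J NJ. rewrite zsum0T // => t. rewrite /eJ /kN ind_sl.
        have -> : ((J0, None) == (J, None) :> slot n) = false.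
        { rewrite xpair_eqE andbT. apply/negP => /eqP E. by rewrite E eqxx in NJ. }
        lia. }
      case E: (cond n c I J0); last first.
      { rewrite (off_cond n c I HI D HD J0 None); [|by rewrite E]. rewrite zsum0T // => t. rewrite /cL E. lia. }
      case: (Z_le_gt_dec (Z.abs j) (Z.of_nat K)) => Hj.
      + have Ht0 : (Z.to_nat (j + Z.of_nat K) < K + K + 1)%N by apply/ltP; lia.
        set t0 := Ordinal Ht0.
        rewrite (sum_single _ t0); last first.
        { move=> t Nt. rewrite /eJ ind_same (ind_diff j); [lia|].
          move=> Ej. apply/negP: Nt. rewrite negbK. apply/eqP. apply: ord_inj.
          rewrite /t0 /=. rewrite /tK in Ej. lia. }
        rewrite /cL E /eJ ind_same.
        have -> : tK K t0 = j by rewrite /tK /t0 /=; lia.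
        rewrite ind_same. lia.
      + rewrite zsum0T; last first.
        { move=> t. rewrite /eJ (ind_diff j); [lia|]. rewrite /tK. have := ltn_ord t. move/ltP. lia. }
        have [_ [_ H3]] := HK (kN n J0). apply H3. lia.
    - rewrite zsum0T; last first.
      { move=> J. rewrite zsum0T // => t. rewrite /eJ ind_diff; [lia|]. move=> E. apply Hns.
        by exists (J, None). }
      have [_ [N _]] := HD i0 Hi0. rewrite N //. move=> s Hs. apply Hns. by exists s. }
  apply lsum => J. apply lsum => t.
  rewrite /cL. case E: (cond n c I J).
  - apply lpow. by apply conj_agen.
  - have -> : (fun k j => (0 * eJ K J t k j)%Z) = (fun _ _ => 0%Z).
    { apply functional_extensionality => k. apply functional_extensionality => j. lia. }
    rewrite ldata_zero. constructor.
Qed.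

Lemma D_agen : agen (gens n c I) D.
Proof.
  rewrite (decompD D). apply ag_mul.
  - apply Dl_agen.
  - by apply (Dt_agen n c I HI).
Qed.

End Core2.

Lemma fg_part n (c : {set 'I_n} -> bool) (I : {set 'I_n}) :
  I != set0 -> c I = false -> fin_gen (bigcapH (Hs n c) I).
Proof.
  move=> HI HcI. exists (List.map rho (gens n c I)). split.
  - move=> g /in_map_iff [d [<- Hd]]. apply (proj2 (cap_char n c I _ HI)).
    exists d. split; [|done]. move=> i Hi.
    have [J [HJ [->|[l [Hl ->]]]]] := gens_inv n c I d Hd.
    + eapply lampD_valid; eauto.
    + eapply genD_valid; eauto.
  - move=> h Hh. have [D [HD ->]] := (proj1 (cap_char n c I _ HI)) Hh.
    apply agen_rho. by apply D_agen.
Qed.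

Lemma saturated_of_good (G : (R -> R) -> Prop) : (forall f, good f -> G f) -> intersection_saturated G.
Proof.
  move=> HG n Hn c. exists (Hs n c). split.
  - move=> i. by apply Hs_subgroup.
  - move=> I HI. split.
    + move=> Hfg. case E: (c I) => //. exfalso. exact: (nonfg n c I HI E Hfg).
    + move=> E. exact: fg_part.
Qed.

Theorem corollary3p1 :
  intersection_saturated thompsonF /\
  intersection_saturated thompsonT /\
  intersection_saturated thompsonV.
Proof.
  split; [|split]; apply saturated_of_good.
  - exact good_to_F.
  - exact good_to_T.
  - exact good_to_V.
Qed.
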